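(* Let $x>0$ and $t>0$ be real numbers. For $n\in\mathbb{N}$ and $\omega=\omega_1\cdots\omega_n\in\{-1,1\}^n$ define, for $0\le k\le n$, \[ S_k(\omega):=x+\frac{\sqrt{t}}{\sqrt{n}}\sum_{i=1}^k\omega_i \] (so $S_0(\omega)=x$; note the normalisation is $\sqrt{n}$, not $\sqrt{k}$). Let $A_n:=\{\omega\in\{-1,1\}^n:\ S_k(\omega)>0 \text{ for all } 1\le k\le n\}$, and equip $A_n$ with the uniform probability measure $\mathbb{P}_n$; this is a fair coin tossed exactly $n$ times, conditioned on the walk $S_k$ staying strictly positive. Then for all extended real numbers $a<b$ with $(a,b)\subset[0,\infty]$, \[ \lim_{n\to\infty}\mathbb{P}_n\big(a\le S_n\le b\big)=\frac{\int_a^b H(t,x,y)\,dy}{\int_0^\infty H(t,x,y)\,dy}, \] where $H(t,x,y):=G(t,x,y)-G(t,x,-y)$ and $G(t,x,y):=\frac{1}{\sqrt{2\pi t}}\exp\!\big(-\frac{(y-x)^2}{2t}\big)$.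
   Context: Here $1$ stands for heads and $-1$ for tails. $\mathbb{P}_n(a\le S_n\le b)=|\{\omega\in A_n: a\le S_n(\omega)\le b\}|/|A_n|$ (note $A_n\neq\emptyset$ since the all-heads sequence lies in $A_n$). *)

(* Defs.v *)
From Stdlib Require Import Reals Lra List.
Import ListNotations.
Open Scope R_scope.

Fixpoint coin_seqs (n : nat) : list (list R) :=
  match n with
  | O => [ [] ]
  | S m => flat_map (fun w => [1 :: w; (-1) :: w]) (coin_seqs m)
  end.

Definition walk (x t : R) (n : nat) (w : list R) (k : nat) : R :=
  x + sqrt t / sqrt (INR n) * fold_right Rplus 0 (firstn k w).

Definition Rltb (a b : R) : bool := if Rlt_dec a b then true else false.
Definition Rleb (a b : R) : bool := if Rle_dec a b then true else false.

Definition in_A (x t : R) (n : nat) (w : list R) : bool :=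
  forallb (fun k => Rltb 0 (walk x t n w k)) (seq 1 n).

Definition A_n (x t : R) (n : nat) : list (list R) :=
  filter (in_A x t n) (coin_seqs n).

(* Upper endpoint in (-oo, +oo]: [None] stands for +oo. *)
Definition in_range (a : R) (b : option R) (s : R) : bool :=
  Rleb a s && match b with None => true | Some b' => Rleb s b' end.

Definition Pn (x t : R) (n : nat) (a : R) (b : option R) : R :=
  INR (length (filter (fun w => in_range a b (walk x t n w n)) (A_n x t n)))
  / INR (length (A_n x t n)).

Definition G (t x y : R) : R :=
  / sqrt (2 * PI * t) * exp (- (y - x) ^ 2 / (2 * t)).

Definition H (t x y : R) : R := G t x y - G t x (- y).

Definition is_RInt (f : R -> R) (a b I : R) : Prop :=
  exists pr : Riemann_integrable f a b, RiemannInt pr = I.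

Definition is_RInt_infty (f : R -> R) (a I : R) : Prop :=
  forall eps : R, eps > 0 -> exists M : R, forall B : R, B >= M ->
    exists J : R, is_RInt f a B J /\ Rabs (J - I) < eps.

Definition is_RInt_ext (f : R -> R) (a : R) (b : option R) (I : R) : Prop :=
  match b with
  | Some b' => is_RInt f a b' I
  | None => is_RInt_infty f a I
  end.

Definition ext_lt (a : R) (b : option R) : Prop :=
  match b with Some b' => a < b' | None => True end.

(* Main.v *)
Require Import Defs.
From Stdlib Require Import Reals Lra Lia List Psatz ZArith.
From Coquelicot Require Import Coquelicot.
Require Import Defs.
Import ListNotations.
Open Scope R_scope.

Definition psum (w : list R) := fold_right Rplus 0 w.
Definition lsum (F : list R -> R) (l : list (list R)) :=
  fold_right (fun w acc => F w + acc) 0 l.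

Lemma lsum_app F l1 l2 : lsum F (l1 ++ l2) = lsum F l1 + lsum F l2.
Proof. induction l1; simpl; [ring| rewrite IHl1; ring]. Qed.

Lemma lsum_fm F l :
  lsum F (flat_map (fun w => [1 :: w; (-1) :: w]) l) =
  lsum (fun w => F (1 :: w) + F ((-1) :: w)) l.
Proof. induction l; simpl; [ring|]. rewrite IHl; simpl; ring. Qed.

Lemma lsum_ext_in F G l : (forall w, In w l -> F w = G w) -> lsum F l = lsum G l.
Proof.
  induction l; intros Hw; simpl; auto.
  rewrite Hw by (left; auto). rewrite IHl; auto. intros; apply Hw; right; auto.
Qed.

Lemma lsum_plus F G l : lsum (fun w => F w + G w) l = lsum F l + lsum G l.
Proof. induction l; simpl; [ring| rewrite IHl; ring]. Qed.

Lemma lsum_ext F G l : (forall w, F w = G w) -> lsum F l = lsum G l.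
Proof. intros; apply lsum_ext_in; auto. Qed.

Lemma coin_sym k : forall f, lsum (fun w => f (psum w)) (coin_seqs k) =
  lsum (fun w => f (- psum w)) (coin_seqs k).
Proof.
  induction k; intros f.
  - simpl. unfold psum; simpl. rewrite Ropp_0. reflexivity.
  - simpl. rewrite !lsum_fm, !lsum_plus. simpl.
    rewrite (IHk (fun s => f (1 + s))), (IHk (fun s => f (-1 + s))).
    rewrite Rplus_comm. f_equal; apply lsum_ext; intros w; f_equal; unfold psum; simpl; ring.
Qed.

Ltac fin := try ring; try (f_equal; ring); try (f_equal; f_equal; ring); try (f_equal; f_equal; f_equal; ring).

Definition goodk (h k : nat) (w : list R) : bool :=
  forallb (fun j => Rleb (1 - INR h) (psum (firstn j w))) (seq 1 k).

Definition psi (h : nat) (phi : R -> R) (s : R) : R :=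
  (if Rle_dec (1 - INR h) s then phi s else 0) -
  (if Rle_dec s (-1 - INR h) then phi (-2 * INR h - s) else 0).

Lemma Rleb_iff a b c d : (a <= b <-> c <= d) -> Rleb a b = Rleb c d.
Proof.
  intros H; unfold Rleb; destruct (Rle_dec a b), (Rle_dec c d); auto; tauto.
Qed.

Lemma forallb_map_ {A B} (f : B -> bool) (g : A -> B) l :
  forallb f (map g l) = forallb (fun z => f (g z)) l.
Proof. induction l; simpl; auto. rewrite IHl; auto. Qed.

Lemma forallb_ext_ {A} (f g : A -> bool) l : (forall z, f z = g z) -> forallb f l = forallb g l.
Proof. intros; induction l; simpl; auto. rewrite H, IHl; auto. Qed.

Lemma goodk_plus h k w : goodk h (S k) (1 :: w) = goodk (S h) k w.
Proof.
  unfold goodk. simpl. replace (Rleb (1 - INR h) (1 + 0)) with true.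
  2:{ unfold Rleb; destruct Rle_dec; auto. pose proof (pos_INR h). lra. }
  simpl. rewrite <- seq_shift, forallb_map_. apply forallb_ext_; intros j.
  cbn [firstn]. apply Rleb_iff. unfold psum; cbn [fold_right].
  destruct h; [simpl; lra|]. rewrite S_INR. lra.
Qed.

Lemma goodk_minus h k w : (2 <= h)%nat ->
  goodk h (S k) ((-1) :: w) = goodk (pred h) k w.
Proof.
  intros Hh. unfold goodk. simpl. replace (Rleb (1 - INR h) (-1 + 0)) with true.
  2:{ unfold Rleb; destruct Rle_dec; auto. apply le_INR in Hh. simpl in Hh. lra. }
  simpl. rewrite <- seq_shift, forallb_map_. apply forallb_ext_; intros j.
  cbn [firstn]. apply Rleb_iff. destruct h as [|h]; [lia|]. rewrite S_INR. simpl pred. unfold psum; cbn [fold_right]. lra.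
Qed.

Lemma goodk_minus1 k w : goodk 1 (S k) ((-1) :: w) = false.
Proof.
  unfold goodk. simpl. unfold Rleb. destruct Rle_dec; auto. simpl in r. lra.
Qed.

Lemma reflection k : forall h phi, (1 <= h)%nat ->
  lsum (fun w => if goodk h k w then phi (psum w) else 0) (coin_seqs k) =
  lsum (fun w => psi h phi (psum w)) (coin_seqs k).
Proof.
  induction k; intros h phi Hh.
  - simpl. unfold goodk, psi; simpl. apply le_INR in Hh; simpl in Hh.
    destruct (Rle_dec (1 - INR h) 0); [|lra]. destruct (Rle_dec 0 (-1 - INR h)); [lra|]. ring.
  - simpl. rewrite !lsum_fm, !lsum_plus.
    assert (E1 : lsum (fun w => if goodk h (S k) (1 :: w) then phi (psum (1 :: w)) else 0) (coin_seqs k)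
      = lsum (fun w => psi h phi (psum (1 :: w))) (coin_seqs k)).
    { rewrite (lsum_ext _ (fun w => if goodk (S h) k w then (fun s => phi (1 + s)) (psum w) else 0)).
      2:{ intros w; rewrite goodk_plus; reflexivity. }
      rewrite (IHk (S h) (fun s => phi (1 + s))) by lia. apply lsum_ext; intros w. unfold psi. simpl psum. rewrite S_INR.
      destruct (Rle_dec (1 - (INR h + 1)) (psum w)), (Rle_dec (1 - INR h) (1 + psum w));
      try lra; destruct (Rle_dec (psum w) (-1 - (INR h + 1))), (Rle_dec (1 + psum w) (-1 - INR h)); try lra;
      fin. }
    rewrite E1. f_equal.
    destruct (Nat.eq_dec h 1) as [->|Hh2].
    + rewrite (lsum_ext _ (fun _ => 0)) by (intros; rewrite goodk_minus1; auto).
      transitivity 0. { clear. induction (coin_seqs k); simpl; lra. }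
      symmetry. unfold psum; simpl fold_right. fold psum.
      rewrite (lsum_ext _ (fun w => (fun s => if Rle_dec 1 s then phi (s - 1) else 0) (psum w)
                               - (fun s => if Rle_dec s (-1) then phi (-1 - s) else 0) (psum w))).
      2:{ intros w. unfold psi. simpl INR. change (fold_right Rplus 0 w) with (psum w).
          destruct (Rle_dec (1-1) (-1 + psum w)), (Rle_dec 1 (psum w)); try lra;
          destruct (Rle_dec (-1 + psum w) (-1-1)), (Rle_dec (psum w) (-1)); try lra;
          fin. }
      assert (Hm : forall F G l, lsum (fun w => F w - G w) l = lsum F l - lsum G l).
      { intros F G l; induction l; simpl; [ring| match goal with H: _ = _ |- _ => rewrite H end; ring]. }
      rewrite Hm. rewrite (coin_sym k (fun s => if Rle_dec s (-1) then phi (-1 - s) else 0)).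
      rewrite (lsum_ext (fun w => if Rle_dec (- psum w) (-1) then phi (-1 - - psum w) else 0)
                (fun w => if Rle_dec 1 (psum w) then phi (psum w - 1) else 0)); [ring|].
      intros w. destruct (Rle_dec (- psum w) (-1)), (Rle_dec 1 (psum w)); try lra.
      f_equal; ring.
    + rewrite (lsum_ext _ (fun w => if goodk (pred h) k w then (fun s => phi (-1 + s)) (psum w) else 0)).
      2:{ intros w; rewrite goodk_minus by lia; reflexivity. }
      rewrite (IHk (pred h) (fun s => phi (-1 + s))) by lia. apply lsum_ext; intros w. unfold psi. simpl psum.
      destruct h as [|h]; [lia|]. simpl pred. rewrite S_INR.
      destruct (Rle_dec (1 - INR h) (psum w)), (Rle_dec (1 - (INR h + 1)) (-1 + psum w));
      try lra; destruct (Rle_dec (psum w) (-1 - INR h)), (Rle_dec (-1 + psum w) (-1 - (INR h + 1))); try lra;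
      fin.
Qed.

Fixpoint binom (n k : nat) : R :=
  match n, k with
  | _, O => 1
  | O, S _ => 0
  | S n', S k' => binom n' k' + binom n' (S k')
  end.

Lemma binom_over n : forall k, (n < k)%nat -> binom n k = 0.
Proof.
  induction n; intros k Hk; destruct k; try lia; simpl; auto.
  rewrite !IHn by lia. ring.
Qed.

Lemma binom_pos n : forall k, (k <= n)%nat -> 0 < binom n k.
Proof.
  induction n; intros k Hk; destruct k; simpl; try lra; try lia.
  destruct (Nat.eq_dec k n) as [->|].
  - rewrite (binom_over n (S n)) by lia. rewrite Rplus_0_r. apply IHn; lia.
  - pose proof (IHn k ltac:(lia)); pose proof (IHn (S k) ltac:(lia)); lra.
Qed.

Lemma binom_nonneg n k : 0 <= binom n k.
Proof.
  destruct (Compare_dec.le_lt_dec k n). left; apply binom_pos; auto. rewrite binom_over; auto; lra.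
Qed.

Lemma binom_n0 n : binom n 0 = 1.
Proof. destruct n; reflexivity. Qed.

Definition Bsum (n : nat) (f : R -> R) : R :=
  sum_f_R0 (fun i => binom n i * f (2 * INR i - INR n)) n.

Lemma Bsum_ext_sum n f : Bsum n f = sum_f_R0 (fun i => binom n i * f (2 * INR i - INR n)) (S n).
Proof. unfold Bsum. rewrite tech5. rewrite binom_over by lia. ring. Qed.

Lemma Bsum_S n f : Bsum (S n) f = Bsum n (fun s => f (1 + s)) + Bsum n (fun s => f (-1 + s)).
Proof.
  rewrite (Bsum_ext_sum n (fun s => f (-1 + s))).
  unfold Bsum. rewrite decomp_sum by lia. simpl pred.
  rewrite (decomp_sum _ (S n)) by lia. simpl pred.
  cbn beta. simpl binom.
  replace (sum_f_R0 (fun i => (binom n i + binom n (S i)) * f (2 * INR (S i) - INR (S n))) n)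
    with (sum_f_R0 (fun i => binom n i * f (1 + (2 * INR i - INR n))) n +
          sum_f_R0 (fun i => binom n (S i) * f (-1 + (2 * INR (S i) - INR n))) n).
  2:{ rewrite <- sum_plus. apply sum_eq; intros i _.
      rewrite !S_INR. replace (1 + (2 * INR i - INR n)) with (2 * (INR i + 1) - (INR n + 1)) by ring.
      replace (-1 + (2 * (INR i + 1) - INR n)) with (2 * (INR i + 1) - (INR n + 1)) by ring. ring. }
  rewrite S_INR. replace (2 * INR 0 - (INR n + 1)) with (-1 + (2 * INR 0 - INR n)) by ring. rewrite binom_n0. ring.
Qed.

Lemma Bsum_0 f : Bsum 0 f = f 0.
Proof. unfold Bsum; simpl. replace (2 * 0 - 0) with 0 by ring. ring. Qed.

Lemma lsum_Bsum k : forall f, lsum (fun w => f (psum w)) (coin_seqs k) = Bsum k f.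
Proof.
  induction k; intros f.
  - simpl. rewrite Bsum_0. unfold psum; simpl. ring.
  - simpl. rewrite lsum_fm, lsum_plus, Bsum_S.
    rewrite <- (IHk (fun s => f (1 + s))), <- (IHk (fun s => f (-1 + s))). reflexivity.
Qed.

Lemma Bsum_sym n f : Bsum n f = Bsum n (fun s => f (- s)).
Proof. rewrite <- !lsum_Bsum. apply coin_sym. Qed.

Lemma Bsum_minus n f g : Bsum n (fun s => f s - g s) = Bsum n f - Bsum n g.
Proof. unfold Bsum. rewrite <- minus_sum. apply sum_eq; intros; ring. Qed.

Lemma Bsum_ext_Z n f g : (forall z, f (IZR z) = g (IZR z)) -> Bsum n f = Bsum n g.
Proof.
  intros Hz. unfold Bsum. apply sum_eq; intros i _.
  replace (2 * INR i - INR n) with (IZR (2 * Z.of_nat i - Z.of_nat n)).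
  rewrite Hz; auto. rewrite minus_IZR, mult_IZR, <- !INR_IZR_INZ. reflexivity.
Qed.

Lemma coin_prop k w : In w (coin_seqs k) -> length w = k /\ List.Forall (fun z => z = 1 \/ z = -1) w.
Proof.
  revert w; induction k; intros w Hw; simpl in Hw.
  - destruct Hw as [<-|[]]; simpl; auto.
  - apply in_flat_map in Hw. destruct Hw as [w' [Hw' Hin]].
    destruct (IHk w' Hw') as [Hl Hf]. simpl in Hin.
    destruct Hin as [<-|[<-|[]]]; simpl; split; auto.
Qed.

Lemma psum_int l : List.Forall (fun z => z = 1 \/ z = -1) l -> exists z, psum l = IZR z.
Proof.
  induction l; intros Hf.
  - exists 0%Z; reflexivity.
  - inversion Hf; subst. destruct (IHl H2) as [z Hz]. unfold psum in *; simpl.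
    rewrite Hz. destruct H1 as [->| ->].
    + exists (1 + z)%Z. rewrite plus_IZR; reflexivity.
    + exists (-1 + z)%Z. rewrite plus_IZR; reflexivity.
Qed.

Lemma Forall_firstn_ {A} (P : A -> Prop) l j : List.Forall P l -> List.Forall P (firstn j l).
Proof.
  revert j; induction l; intros j Hf; destruct j; simpl; auto.
  inversion Hf; subst; constructor; auto.
Qed.

Lemma len_filter_lsum (P : list R -> bool) l :
  INR (length (filter P l)) = lsum (fun w => if P w then 1 else 0) l.
Proof.
  induction l; simpl; auto. destruct (P a); simpl length; rewrite ?S_INR, IHl; ring.
Qed.

Lemma lsum_filter F (Q : list R -> bool) l :
  lsum F (filter Q l) = lsum (fun w => if Q w then F w else 0) l.
Proof.
  induction l; simpl; auto. destruct (Q a); simpl; rewrite IHl; ring.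
Qed.

Definition cc (t : R) (n : nat) : R := sqrt t / sqrt (INR n).
Definition hh (x t : R) (n : nat) : nat := Z.to_nat (1 - up (- (x / cc t n))).

Lemma thr (x c : R) (hx : 0 < x) (hc : 0 < c) :
  let h := Z.to_nat (1 - up (- (x / c))) in
  (1 <= h)%nat /\ forall z, (0 < x + c * IZR z <-> 1 - INR h <= IZR z).
Proof.
  intros h. destruct (archimed (- (x / c))) as [H1 H2].
  set (u := up (- (x / c))) in *.
  assert (hxc : 0 < x / c) by (apply Rdiv_lt_0_compat; auto).
  assert (Hu : (u <= 0)%Z). { apply Z.lt_succ_r. apply lt_IZR. simpl. lra. }
  assert (Hh : INR h = IZR (1 - u)). { unfold h. rewrite INR_IZR_INZ, Z2Nat.id by lia. reflexivity. }
  split.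
  - apply INR_le. rewrite Hh, minus_IZR. apply IZR_le in Hu. simpl in *. lra.
  - intros z. rewrite Hh, minus_IZR. simpl IZR. split; intros Hz.
    + assert (- (x / c) < IZR z).
      { apply (Rmult_lt_reg_l c); auto. unfold Rdiv. field_simplify; [|lra]. lra. }
      destruct (Z_lt_le_dec z u) as [Hlt|Hle]; [|apply IZR_le in Hle; lra].
      assert (IZR z <= IZR u - 1). { rewrite <- minus_IZR. apply IZR_le. lia. }
      lra.
    + assert (- (x / c) < IZR z) by lra.
      assert (c * (- (x / c)) < c * IZR z) by (apply Rmult_lt_compat_l; auto).
      replace (c * (- (x / c))) with (- x) in H0 by (field; lra). lra.
Qed.

Definition T (t : R) (n : nat) (al : R) (g : R -> R) : R := Bsum n (fun s => g (al + cc t n * s)).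

Definition gI (a : R) (b : option R) (y : R) : R :=
  if Rlt_dec 0 y then (if in_range a b y then 1 else 0) else 0.
Definition gP (y : R) : R := if Rlt_dec 0 y then 1 else 0.

Lemma cc_pos t n : 0 < t -> (1 <= n)%nat -> 0 < cc t n.
Proof.
  intros ht hn. unfold cc. apply Rdiv_lt_0_compat; apply sqrt_lt_R0; auto.
  apply lt_0_INR; lia.
Qed.

Lemma inA_goodk x t n w : 0 < x -> 0 < t -> (1 <= n)%nat -> In w (coin_seqs n) ->
  in_A x t n w = goodk (hh x t n) n w.
Proof.
  intros hx ht hn Hw. destruct (thr x (cc t n) hx (cc_pos t n ht hn)) as [_ Hthr].
  destruct (coin_prop n w Hw) as [_ Hf].
  unfold in_A, goodk. apply forallb_ext_; intros j.
  destruct (psum_int _ (Forall_firstn_ _ _ j Hf)) as [z Hz].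
  unfold walk, Rltb, Rleb. fold (cc t n). fold (psum (firstn j w)). rewrite Hz.
  unfold hh. destruct (Rlt_dec 0 _), (Rle_dec _ _); auto; exfalso.
  - apply n0, Hthr; auto.
  - apply n0, Hthr; auto.
Qed.

Lemma count_repr x t n (phi : R -> R) : 0 < x -> 0 < t -> (1 <= n)%nat ->
  lsum (fun w => if in_A x t n w then phi (walk x t n w n) else 0) (coin_seqs n) =
  T t n x (fun y => if Rlt_dec 0 y then phi y else 0)
  - T t n (x - 2 * cc t n * INR (hh x t n)) (fun y => if Rlt_dec 0 y then phi y else 0).
Proof.
  intros hx ht hn.
  destruct (thr x (cc t n) hx (cc_pos t n ht hn)) as [H1 Hthr].
  fold (hh x t n) in H1, Hthr. set (h := hh x t n) in *.
  rewrite (lsum_ext_in _ (fun w => if goodk h n w then (fun s => phi (x + cc t n * s)) (psum w) else 0)).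
  2:{ intros w Hw. rewrite inA_goodk by auto. fold h. unfold walk. fold (cc t n).
      rewrite firstn_all2. reflexivity. destruct (coin_prop n w Hw); lia. }
  rewrite (reflection n h (fun s => phi (x + cc t n * s))) by auto. rewrite lsum_Bsum.
  unfold psi. rewrite Bsum_minus. unfold T. f_equal.
  - apply Bsum_ext_Z; intros z. specialize (Hthr z).
    destruct (Rle_dec _ _), (Rlt_dec 0 _); tauto.
  - rewrite Bsum_sym. apply Bsum_ext_Z; intros z.
    replace (- IZR z) with (IZR (- z)) by (rewrite opp_IZR; auto).
    specialize (Hthr (z - 2 * Z.of_nat h)%Z).
    rewrite minus_IZR, mult_IZR, <- INR_IZR_INZ in Hthr. simpl (IZR 2) in Hthr.
    rewrite opp_IZR.
    replace (x - 2 * cc t n * INR h + cc t n * IZR z) with (x + cc t n * (IZR z - 2 * INR h)) by ring.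
    destruct (Rle_dec (- IZR z) (-1 - INR h)), (Rlt_dec 0 (x + cc t n * (IZR z - 2 * INR h))).
    + f_equal. f_equal. ring.
    + exfalso. apply n0, Hthr. lra.
    + exfalso. apply Hthr in r. lra.
    + reflexivity.
Qed.

Lemma Pn_repr x t n a b : 0 < x -> 0 < t -> (1 <= n)%nat ->
  Pn x t n a b =
  (T t n x (gI a b) - T t n (x - 2 * cc t n * INR (hh x t n)) (gI a b)) /
  (T t n x gP - T t n (x - 2 * cc t n * INR (hh x t n)) gP).
Proof.
  intros hx ht hn. unfold Pn, A_n. rewrite !len_filter_lsum, !lsum_filter.
  rewrite (count_repr x t n (fun y => if in_range a b y then 1 else 0)) by auto.
  pose proof (count_repr x t n (fun _ => 1) hx ht hn) as Hc. cbv beta in Hc.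
  rewrite Hc. reflexivity.
Qed.

Lemma Rabs_le_inv a b : Rabs a <= b -> -b <= a <= b.
Proof. intros H. unfold Rabs in H. destruct (Rcase_abs a); lra. Qed.

Lemma binom_1 n : binom n 1 = INR n.
Proof. induction n; simpl binom; auto. rewrite binom_n0, IHn, S_INR. ring. Qed.

Lemma absorb n : forall k, INR (S k) * binom (S n) (S k) = INR (S n) * binom n k.
Proof.
  induction n; intros k.
  - destruct k; simpl; try lra.
  - destruct k.
    + change (binom (S (S n)) 1) with (binom (S n) 0 + binom (S n) 1).
      rewrite binom_n0, binom_1, !S_INR. simpl. try ring.
    + change (binom (S (S n)) (S (S k))) with (binom (S n) (S k) + binom (S n) (S (S k))).
      rewrite Rmult_plus_distr_l.
      replace (INR (S (S k)) * binom (S n) (S k)) with (INR (S k) * binom (S n) (S k) + binom (S n) (S k))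
        by (rewrite (S_INR (S k)); ring).
      rewrite IHn, IHn.
      change (binom (S n) (S k)) with (binom n k + binom n (S k)).
      rewrite !S_INR. ring.
Qed.

Lemma ratio n k : INR (S k) * binom n (S k) = (INR n - INR k) * binom n k.
Proof.
  pose proof (absorb n k) as Ha.
  change (binom (S n) (S k)) with (binom n k + binom n (S k)) in Ha.
  rewrite !S_INR in *. nra.
Qed.

Lemma ln_upper y : 0 < y -> ln y <= y - 1.
Proof.
  intros hy. rewrite <- (exp_ln y) at 2 by auto.
  pose proof (exp_ineq1_le (ln y)). lra.
Qed.

Lemma ln_lower y : 0 < y -> 1 - / y <= ln y.
Proof.
  intros hy. pose proof (ln_upper (/ y) (Rinv_0_lt_compat _ hy)).
  rewrite ln_Rinv in H by auto. lra.
Qed.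

Lemma abs_div_le X Y Z : 0 < Y -> Rabs X <= Z * Y -> Rabs (X / Y) <= Z.
Proof.
  intros hY hX. unfold Rdiv. rewrite Rabs_mult, Rabs_inv, (Rabs_pos_eq Y) by lra.
  apply (Rmult_le_reg_r Y); auto. rewrite Rmult_assoc, Rinv_l by lra. lra.
Qed.

Lemma step_est (N v : R) : 1 <= N -> Rabs v <= 1/2 ->
  let A := N * (1 - v) + 1 in let B := N * (1 + v) + 1 in
  Rabs (ln (A / B) + 2 * v) <= 4 * Rabs v * (Rabs v + / N).
Proof.
  intros HN Hv A B.
  assert (HA : N / 2 <= A) by (unfold A; apply Rabs_le_inv in Hv; nra).
  assert (HB : N / 2 <= B) by (unfold B; apply Rabs_le_inv in Hv; nra).
  assert (HAB : 0 < A / B) by (apply Rdiv_lt_0_compat; lra).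
  pose proof (ln_upper _ HAB) as U. pose proof (ln_lower _ HAB) as L.
  assert (E1 : A / B - 1 + 2 * v = (2 * v * (N * v + 1)) / B) by (unfold A, B in *; field; lra).
  assert (E2 : 1 - / (A / B) + 2 * v = (2 * v * (1 - N * v)) / A) by (unfold A, B in *; field; split; lra).
  assert (Hb : forall Y, N / 2 <= Y -> Rabs (2 * v * (N * v + 1) / Y) <= 4 * Rabs v * (Rabs v + / N)
                                   /\ Rabs (2 * v * (1 - N * v) / Y) <= 4 * Rabs v * (Rabs v + / N)).
  { intros Y HY. assert (HN' : 0 < / N) by (apply Rinv_0_lt_compat; lra).
    assert (Hk : 4 * Rabs v * (Rabs v + / N) * Y >= 2 * Rabs v * (N * Rabs v + 1)).
    { assert (4 * Rabs v * (Rabs v + / N) * Y >= 4 * Rabs v * (Rabs v + / N) * (N/2)).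
      { apply Rle_ge, Rmult_le_compat_l; auto. pose proof (Rabs_pos v). nra. }
      replace (4 * Rabs v * (Rabs v + / N) * (N / 2)) with (2 * Rabs v * (N * Rabs v + 1)) in H
        by (field; lra). lra. }
    split; apply abs_div_le; try lra; rewrite !Rabs_mult, (Rabs_pos_eq 2) by lra.
    - assert (Rabs (N * v + 1) <= N * Rabs v + 1).
      { eapply Rle_trans; [apply Rabs_triang|]. rewrite Rabs_mult, (Rabs_pos_eq N), Rabs_R1 by lra. lra. }
      pose proof (Rabs_pos v). nra.
    - assert (Rabs (1 - N * v) <= N * Rabs v + 1).
      { unfold Rminus. eapply Rle_trans; [apply Rabs_triang|]. rewrite Rabs_Ropp, Rabs_mult, (Rabs_pos_eq N), Rabs_R1 by lra. lra. }
      pose proof (Rabs_pos v). nra. }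
  destruct (Hb B HB) as [HB1 _]. destruct (Hb A HA) as [_ HA2].
  rewrite <- E1 in HB1. rewrite <- E2 in HA2.
  apply Rabs_le_inv in HB1. apply Rabs_le_inv in HA2. apply Rabs_le. lra.
Qed.

Definition Lam (n i : nat) : R :=
  ln (binom n i) + (2 * INR i - INR n) ^ 2 / (2 * INR n).

Lemma step_Lam n i : (1 <= n)%nat -> (i < n)%nat ->
  let v := (2 * INR i - INR n + 1) / INR n in
  Rabs v <= 1/2 ->
  Rabs (Lam n (S i) - Lam n i) <= 4 * Rabs v * (Rabs v + / INR n).
Proof.
  intros hn hi v hv.
  assert (HN : 1 <= INR n) by (apply (le_INR 1); lia).
  pose proof (step_est (INR n) v HN hv) as Hs. cbv zeta in Hs.
  assert (Hbi : 0 < binom n i) by (apply binom_pos; lia).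
  assert (Hbs : 0 < binom n (S i)) by (apply binom_pos; lia).
  assert (Hr : binom n (S i) = (INR n - INR i) / (INR i + 1) * binom n i).
  { pose proof (ratio n i) as R. rewrite S_INR in R. pose proof (pos_INR i).
    apply (Rmult_eq_reg_l (INR i + 1)); [|lra]. rewrite R. field. lra. }
  assert (Hni : INR i + 1 <= INR n) by (rewrite <- S_INR; apply le_INR; lia).
  assert (EA : INR n * (1 - v) + 1 = 2 * (INR n - INR i)) by (unfold v; field; lra).
  assert (EB : INR n * (1 + v) + 1 = 2 * (INR i + 1)) by (unfold v; field; lra).
  rewrite EA, EB in Hs.
  replace (2 * (INR n - INR i) / (2 * (INR i + 1))) with ((INR n - INR i) / (INR i + 1)) in Hs
    by (field; pose proof (pos_INR i); lra).
  unfold Lam. rewrite Hr, ln_mult.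
  2:{ apply Rdiv_lt_0_compat; pose proof (pos_INR i); lra. }
  2:{ auto. }
  replace (ln ((INR n - INR i) / (INR i + 1)) + ln (binom n i) +
     (2 * INR (S i) - INR n) ^ 2 / (2 * INR n) - (ln (binom n i) + (2 * INR i - INR n) ^ 2 / (2 * INR n)))
   with (ln ((INR n - INR i) / (INR i + 1)) + 2 * v).
  { auto. }
  unfold v; rewrite S_INR; field; lra.
Qed.

Lemma telescope (f : nat -> R) (eps : R) a : forall d,
  (forall j, (a <= j < a + d)%nat -> Rabs (f (S j) - f j) <= eps) ->
  Rabs (f (a + d)%nat - f a) <= INR d * eps.
Proof.
  induction d; intros H.
  - rewrite Nat.add_0_r. simpl. unfold Rminus. rewrite Rplus_opp_r, Rabs_R0. lra.
  - replace (a + S d)%nat with (S (a + d)) by lia.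
    replace (f (S (a + d)) - f a) with ((f (S (a + d)) - f (a + d)%nat) + (f (a + d)%nat - f a)) by ring.
    eapply Rle_trans; [apply Rabs_triang|]. rewrite S_INR.
    pose proof (H (a + d)%nat ltac:(lia)). pose proof (IHd (fun j hj => H j ltac:(lia))). lra.
Qed.

Lemma sqrt_facts N : 0 < N -> sqrt N * sqrt N = N /\ 0 < sqrt N.
Proof. intros; split; [apply sqrt_sqrt; lra| apply sqrt_lt_R0; auto]. Qed.

Lemma window (K : R) (n i : nat) : 0 < K -> (1 <= n)%nat ->
  K / sqrt (INR n) <= 1/2 -> 1 <= K * sqrt (INR n) -> (i <= n)%nat ->
  Rabs (2 * INR i - INR n) <= K * sqrt (INR n) ->
  Rabs (Lam n i - Lam n (n / 2)) <= 4 * K ^ 3 / sqrt (INR n) + 4 * K ^ 2 / INR n.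
Proof.
  intros hK hn hK1 hK2 hi hs.
  set (N := INR n) in *. set (m := (n / 2)%nat).
  assert (HN : 1 <= N) by (apply (le_INR 1); lia).
  destruct (sqrt_facts N ltac:(lra)) as [Hsq Hsp]. set (q := sqrt N) in *.
  assert (Hm : (2 * m <= n <= 2 * m + 1)%nat) by (unfold m; pose proof (Nat.div_mod n 2); pose proof (Nat.mod_upper_bound n 2); lia).
  assert (Hm1 : 2 * INR m <= N <= 2 * INR m + 1).
  { unfold N. destruct Hm as [H1 H2]. apply le_INR in H1, H2. rewrite plus_INR, mult_INR in H2. rewrite mult_INR in H1. simpl in H1, H2. lra. }
  set (eps := 4 * (K / q) * (K / q + / N)).
  assert (Heps : forall j, Rabs (2 * INR j - N + 1) <= K * q -> (j < n)%nat ->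
     Rabs (Lam n (S j) - Lam n j) <= eps).
  { intros j Hj Hjn. assert (Hv : Rabs ((2 * INR j - N + 1) / N) <= K / q).
    { apply abs_div_le; [lra|]. replace (K / q * N) with (K * q) by (rewrite <- Hsq; field; lra). auto. }
    eapply Rle_trans; [apply step_Lam; auto; change (INR n) with N; lra|]. unfold eps. change (INR n) with N.
    pose proof (Rabs_pos ((2 * INR j - N + 1) / N)).
    assert (0 < / N) by (apply Rinv_0_lt_compat; lra).
    apply Rmult_le_compat; try nra. }
  assert (Hcount : forall d, INR d <= K * q -> INR d * eps <= 4 * K ^ 3 / q + 4 * K ^ 2 / N).
  { intros d Hd. unfold eps. assert (0 <= eps) by (unfold eps; assert (0 < / N) by (apply Rinv_0_lt_compat; lra); assert (0 < K/q) by (apply Rdiv_lt_0_compat; lra); nra).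
    apply Rle_trans with (K * q * (4 * (K / q) * (K / q + / N))). apply Rmult_le_compat_r; auto.
    right. rewrite <- Hsq. field. lra. }
  destruct (Compare_dec.le_lt_dec m i) as [Hmi|Hmi].
  - replace i with (m + (i - m))%nat by lia.
    eapply Rle_trans; [apply telescope|].
    + intros j Hj. apply Heps; [|lia].
      assert (INR m <= INR j) by (apply le_INR; lia).
      assert (INR j + 1 <= INR i) by (rewrite <- S_INR; apply le_INR; lia).
      apply Rabs_le_inv in hs. apply Rabs_le; lra.
    + apply Hcount. rewrite minus_INR by lia.
      apply Rabs_le_inv in hs. lra.
  - rewrite <- Rabs_Ropp. replace (- (Lam n i - Lam n m)) with (Lam n m - Lam n i) by ring.
    replace m with (i + (m - i))%nat by lia.
    eapply Rle_trans; [apply telescope|].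
    + intros j Hj. apply Heps; [|lia].
      assert (INR i <= INR j) by (apply le_INR; lia).
      assert (INR j + 1 <= INR m) by (rewrite <- S_INR; apply le_INR; lia).
      apply Rabs_le_inv in hs. apply Rabs_le; lra.
    + apply Hcount. rewrite minus_INR by lia.
      assert (INR i + 1 <= INR m) by (rewrite <- S_INR; apply le_INR; lia).
      apply Rabs_le_inv in hs. lra.
Qed.

Definition eta (K : R) (n : nat) : R :=
  4 * K ^ 3 / sqrt (INR n) + 4 * K ^ 2 / INR n + / (2 * INR n).

Lemma rho_form (K : R) (n i : nat) : 0 < K -> (1 <= n)%nat ->
  K / sqrt (INR n) <= 1/2 -> 1 <= K * sqrt (INR n) -> (i <= n)%nat ->
  Rabs (2 * INR i - INR n) <= K * sqrt (INR n) ->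
  exists th, Rabs th <= eta K n /\
    binom n i / binom n (n / 2) = exp (- (2 * INR i - INR n) ^ 2 / (2 * INR n)) * exp th.
Proof.
  intros hK hn h1 h2 hi hs.
  pose proof (window K n i hK hn h1 h2 hi hs) as W.
  set (m := (n / 2)%nat) in *.
  assert (HN : 1 <= INR n) by (apply (le_INR 1); lia).
  assert (Hm : (2 * m <= n <= 2 * m + 1)%nat) by (unfold m; pose proof (Nat.div_mod n 2); pose proof (Nat.mod_upper_bound n 2); lia).
  assert (Hm1 : 2 * INR m <= INR n <= 2 * INR m + 1).
  { destruct Hm as [H1 H2]. apply le_INR in H1, H2. rewrite plus_INR, mult_INR in H2. rewrite mult_INR in H1. simpl in H1, H2. lra. }
  exists (Lam n i - Lam n m + (2 * INR m - INR n) ^ 2 / (2 * INR n)).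
  split.
  - unfold eta. eapply Rle_trans; [apply Rabs_triang|].
    rewrite (Rabs_pos_eq ((2 * INR m - INR n) ^ 2 / (2 * INR n))).
    2:{ apply Rdiv_le_0_compat; [apply pow2_ge_0| lra]. }
    assert ((2 * INR m - INR n) ^ 2 / (2 * INR n) <= / (2 * INR n)).
    { unfold Rdiv. rewrite <- (Rmult_1_l (/ (2 * INR n))) at 2. apply Rmult_le_compat_r. left; apply Rinv_0_lt_compat; lra. nra. }
    lra.
  - rewrite <- exp_plus. unfold Lam.
    assert (0 < binom n i) by (apply binom_pos; auto).
    assert (0 < binom n m) by (apply binom_pos; unfold m; apply Nat.div_le_upper_bound; lia).
    replace (- (2 * INR i - INR n) ^ 2 / (2 * INR n) +
      (ln (binom n i) + (2 * INR i - INR n) ^ 2 / (2 * INR n) -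
       (ln (binom n m) + (2 * INR m - INR n) ^ 2 / (2 * INR n)) +
       (2 * INR m - INR n) ^ 2 / (2 * INR n))) with (ln (binom n i) - ln (binom n m)) by (field; lra).
    unfold Rminus. rewrite exp_plus, exp_Ropp, !exp_ln by auto. reflexivity.
Qed.

Definition clamp (u v z : R) : R := Rmax u (Rmin v z).
Definition indI (u v y : R) : R := if Rle_dec u y then (if Rle_dec y v then 1 else 0) else 0.
Definition gsum (y0 D : R) (n : nat) (F : R -> R) : R := sum_f_R0 (fun i => F (y0 + D * INR i)) n.

Lemma clamp_mono u v z1 z2 : u <= v -> z1 <= z2 -> clamp u v z1 <= clamp u v z2.
Proof. intros; unfold clamp, Rmax, Rmin; repeat destruct Rle_dec; lra. Qed.
Lemma clamp_in u v z : u <= v -> u <= clamp u v z <= v.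
Proof. intros; unfold clamp, Rmax, Rmin; repeat destruct Rle_dec; lra. Qed.
Lemma clamp_id u v z : u <= z <= v -> clamp u v z = z.
Proof. intros; unfold clamp, Rmax, Rmin; repeat destruct Rle_dec; lra. Qed.
Lemma clamp_lip u v z1 z2 : u <= v -> z1 <= z2 -> clamp u v z2 - clamp u v z1 <= z2 - z1.
Proof. intros; unfold clamp, Rmax, Rmin; repeat destruct Rle_dec; lra. Qed.

Lemma tele_grid (Phi : R -> R) y0 D n :
  gsum y0 D n (fun y => Phi (y + D / 2) - Phi (y - D / 2)) =
  Phi (y0 + D * INR n + D / 2) - Phi (y0 - D / 2).
Proof.
  unfold gsum. induction n.
  - simpl. replace (y0 + D * 0 + D / 2) with (y0 + D * 0 + D / 2) by ring.
    replace (y0 + D * 0 - D / 2) with (y0 - D / 2) by ring. ring.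
  - rewrite tech5, IHn. rewrite S_INR.
    replace (y0 + D * (INR n + 1) - D / 2) with (y0 + D * INR n + D / 2) by field. ring.
Qed.

Lemma gsum_le y0 D n F G : (forall y, F y <= G y) -> gsum y0 D n F <= gsum y0 D n G.
Proof. intros; unfold gsum; apply sum_Rle; auto. Qed.

Lemma gsum_abs y0 D n F : Rabs (gsum y0 D n F) <= gsum y0 D n (fun y => Rabs (F y)).
Proof. unfold gsum. apply Rabs_triang_gen. Qed.

Lemma gsum_minus y0 D n F G : gsum y0 D n (fun y => F y - G y) = gsum y0 D n F - gsum y0 D n G.
Proof. unfold gsum. rewrite <- minus_sum. reflexivity. Qed.

Lemma gsum_plus y0 D n F G : gsum y0 D n (fun y => F y + G y) = gsum y0 D n F + gsum y0 D n G.
Proof. unfold gsum. rewrite <- sum_plus. reflexivity. Qed.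

Lemma gsum_scal y0 D n k F : gsum y0 D n (fun y => k * F y) = k * gsum y0 D n F.
Proof. unfold gsum. rewrite scal_sum. apply sum_eq; intros; ring. Qed.

Lemma count_grid u v y0 D n : 0 < D -> u <= v ->
  gsum y0 D n (fun y => D * indI u v y) <= v - u + D.
Proof.
  intros hD huv. set (Psi := clamp (u - D/2) (v + D/2)).
  apply Rle_trans with (gsum y0 D n (fun y => Psi (y + D/2) - Psi (y - D/2))).
  - apply gsum_le; intros y. unfold indI. destruct Rle_dec; [destruct Rle_dec|].
    + unfold Psi. rewrite !clamp_id by lra. lra.
    + rewrite Rmult_0_r. unfold Psi. pose proof (clamp_mono (u - D/2) (v + D/2) (y - D/2) (y + D/2)). lra.
    + rewrite Rmult_0_r. unfold Psi. pose proof (clamp_mono (u - D/2) (v + D/2) (y - D/2) (y + D/2)). lra.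
  - rewrite tele_grid. unfold Psi.
    pose proof (clamp_in (u - D/2) (v + D/2) (y0 + D * INR n + D / 2)).
    pose proof (clamp_in (u - D/2) (v + D/2) (y0 - D / 2)). lra.
Qed.

Lemma gsum_bound y0 D n (a g : R -> R) (p q M : R) : 0 < D -> p <= q -> 0 <= M ->
  (forall y, Rabs (g y) <= 1) -> (forall y, y < p \/ q < y -> g y = 0) ->
  (forall y, p <= y <= q -> Rabs (a y) <= M) ->
  Rabs (gsum y0 D n (fun y => D * a y * g y)) <= M * (q - p + D).
Proof.
  intros hD hpq hM hg hg0 ha.
  eapply Rle_trans; [apply gsum_abs|].
  apply Rle_trans with (gsum y0 D n (fun y => M * (D * indI p q y))).
  - apply gsum_le; intros y. unfold indI. destruct Rle_dec; [destruct Rle_dec|].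
    + rewrite !Rabs_mult, (Rabs_pos_eq D) by lra. specialize (ha y ltac:(lra)). specialize (hg y).
      assert (Rabs (a y) * Rabs (g y) <= M) by (apply Rle_trans with (M * 1); [apply Rmult_le_compat; auto; apply Rabs_pos| lra]).
      rewrite Rmult_assoc. rewrite Rmult_1_r. rewrite (Rmult_comm M D). apply Rmult_le_compat_l; lra.
    + rewrite hg0 by lra. rewrite Rmult_0_r, Rabs_R0. lra.
    + rewrite hg0 by lra. rewrite Rmult_0_r, Rabs_R0. lra.
  - rewrite gsum_scal. apply Rmult_le_compat_l; auto. apply count_grid; auto.
Qed.

Lemma RInt_diff f a b c : (forall a b, ex_RInt f a b) -> RInt f a c - RInt f a b = RInt f b c.
Proof. intros Hf. rewrite <- (RInt_Chasles f a b c) by auto. unfold plus; simpl. ring. Qed.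
Lemma RInt_const' a b k : RInt (fun _ => k) a b = (b - a) * k.
Proof. rewrite RInt_const. reflexivity. Qed.
Lemma RInt_minus' f g a b : ex_RInt f a b -> ex_RInt g a b ->
  RInt (fun x => f x - g x) a b = RInt f a b - RInt g a b.
Proof. intros H1 H2. exact (RInt_minus f g a b H1 H2). Qed.

Definition gprop (g : R -> R) (p : R) (q : option R) : Prop :=
  (forall y, 0 <= g y <= 1) /\
  (forall y, y < p -> g y = 0) /\
  (forall y, p < y -> match q with Some q' => (y < q' -> g y = 1) /\ (q' < y -> g y = 0) | None => g y = 1 end).

Lemma RS (f g : R -> R) (p q L y0 D : R) (n : nat) :
  0 < D -> p < q -> 0 <= L ->
  (forall a b, ex_RInt f a b) -> (forall y, Rabs (f y) <= 1) ->
  (forall y z, p <= y <= q -> p <= z <= q -> Rabs (f z - f y) <= L * Rabs (z - y)) ->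
  gprop g p (Some q) ->
  y0 - D / 2 <= p -> q <= y0 + D * INR n + D / 2 ->
  Rabs (gsum y0 D n (fun y => D * f y * g y) - RInt f p q) <= L * D / 2 * (q - p + D) + 8 * D.
Proof.
  intros hD hpq hL hex hf hlip [hg1 [hg2 hg3]] hlo hhi.
  set (Phi := fun z => RInt f p (clamp p q z)).
  assert (Htel : gsum y0 D n (fun y => Phi (y + D/2) - Phi (y - D/2)) = RInt f p q).
  { rewrite tele_grid. unfold Phi.
    replace (clamp p q (y0 + D * INR n + D / 2)) with q
      by (unfold clamp, Rmax, Rmin; repeat destruct Rle_dec; lra).
    replace (clamp p q (y0 - D / 2)) with p
      by (unfold clamp, Rmax, Rmin; repeat destruct Rle_dec; lra).
    rewrite RInt_point. unfold zero; simpl. ring. }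
  rewrite <- Htel, <- gsum_minus.
  eapply Rle_trans; [apply gsum_abs|].
  apply Rle_trans with (gsum y0 D n (fun y => L * D / 2 * (D * indI p q y) +
      (2 * (D * indI (p - D/2) (p + D/2) y) + 2 * (D * indI (q - D/2) (q + D/2) y)))).
  2:{ rewrite gsum_plus, gsum_plus, !gsum_scal.
      pose proof (count_grid p q y0 D n hD ltac:(lra)) as C1.
      pose proof (count_grid (p - D/2) (p + D/2) y0 D n hD ltac:(lra)) as C2.
      pose proof (count_grid (q - D/2) (q + D/2) y0 D n hD ltac:(lra)) as C3.
      rewrite gsum_scal in C1, C2, C3.
      assert (0 <= L * D / 2) by (apply Rmult_le_pos; [apply Rmult_le_pos|]; lra).
      assert (L * D / 2 * (D * gsum y0 D n (indI p q)) <= L * D / 2 * (q - p + D))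
        by (apply Rmult_le_compat_l; auto). lra. }
  apply gsum_le; intros y.
  assert (HPhi : forall a b, a <= b -> Phi b - Phi a = RInt f (clamp p q a) (clamp p q b)).
  { intros a b _. unfold Phi. apply RInt_diff; auto. }
  rewrite HPhi by lra.
  assert (Hi0 : forall u v, 0 <= indI u v y) by (intros; unfold indI; repeat destruct Rle_dec; lra).
  assert (Hi1 : forall u v, 0 <= D * indI u v y) by (intros; apply Rmult_le_pos; auto; lra).
  assert (Hi2 : 0 <= L * D / 2 * (D * indI p q y)) by (apply Rmult_le_pos; auto; apply Rmult_le_pos; [apply Rmult_le_pos|]; lra).
  pose proof (Hi1 p q). pose proof (Hi1 (p - D/2) (p + D/2)). pose proof (Hi1 (q - D/2) (q + D/2)).
  assert (HC : Rabs (RInt f (clamp p q (y - D/2)) (clamp p q (y + D/2))) <= D).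
  { pose proof (clamp_mono p q (y - D/2) (y + D/2) ltac:(lra) ltac:(lra)).
    pose proof (clamp_lip p q (y - D/2) (y + D/2) ltac:(lra) ltac:(lra)).
    eapply Rle_trans; [apply abs_RInt_le_const with (M := 1); auto|]. nra. }
  destruct (Rle_dec p (y - D/2)) as [Ha|Ha]; [destruct (Rle_dec (y + D/2) q) as [Hb|Hb]|].
  -
    rewrite !clamp_id by lra.
    assert (Hg : g y = 1) by (apply (proj1 (hg3 y ltac:(lra))); lra).
    rewrite Hg, Rmult_1_r.
    replace (D * f y) with (RInt (fun _ => f y) (y - D/2) (y + D/2)) by (rewrite RInt_const'; lra).
    rewrite <- RInt_minus' by (auto; apply ex_RInt_const).
    assert (Hin : indI p q y = 1) by (unfold indI; repeat destruct Rle_dec; lra).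
    rewrite Hin.
    eapply Rle_trans.
    { apply abs_RInt_le_const with (M := L * (D / 2)); [lra| |].
      - exact (ex_RInt_minus (fun _ => f y) f _ _ (ex_RInt_const _ _ _) (hex _ _)).
      - intros z Hz. rewrite <- Rabs_Ropp. replace (- (f y - f z)) with (f z - f y) by ring.
        eapply Rle_trans; [apply hlip; lra|]. apply Rmult_le_compat_l; auto.
        apply Rabs_le; lra. }
    assert (0 <= indI (p - D / 2) (p + D / 2) y) by auto. assert (0 <= indI (q - D / 2) (q + D / 2) y) by auto.
    replace (y + D / 2 - (y - D / 2)) with D by lra. nra.
  -
    assert (Hin : indI (q - D/2) (q + D/2) y = 1 \/ y + D/2 > q + D).
    { unfold indI; repeat destruct Rle_dec; lra. }
    destruct (Rle_dec (y - D/2) q) as [Hc|Hc].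
    + assert (Hin' : indI (q - D/2) (q + D/2) y = 1) by (unfold indI; repeat destruct Rle_dec; lra).
      rewrite Hin'. eapply Rle_trans; [apply Rabs_triang|]. rewrite Rabs_Ropp.
      assert (Rabs (D * f y * g y) <= D).
      { rewrite !Rabs_mult, (Rabs_pos_eq D) by lra. specialize (hf y). specialize (hg1 y).
        rewrite (Rabs_pos_eq (g y)) by lra.
        assert (Rabs (f y) * g y <= 1) by (pose proof (Rabs_pos (f y)); nra).
        rewrite Rmult_assoc. rewrite <- (Rmult_1_r D) at 2. apply Rmult_le_compat_l; lra. }
      assert (0 <= indI p q y) by auto. assert (0 <= indI (p - D / 2) (p + D / 2) y) by auto.
      lra.
    + rewrite (proj2 (hg3 y ltac:(lra))) by lra.
      replace (clamp p q (y - D / 2)) with q by (unfold clamp, Rmax, Rmin; repeat destruct Rle_dec; lra).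
      replace (clamp p q (y + D / 2)) with q by (unfold clamp, Rmax, Rmin; repeat destruct Rle_dec; lra).
      rewrite RInt_point. unfold zero; simpl.
      replace (D * f y * 0 - 0) with 0 by ring. rewrite Rabs_R0.
      assert (0 <= indI p q y) by auto. assert (0 <= indI (p - D / 2) (p + D / 2) y) by auto.
      assert (0 <= indI (q - D / 2) (q + D / 2) y) by auto.
      lra.
  -
    destruct (Rle_dec p (y + D/2)) as [Hc|Hc].
    + assert (Hin' : indI (p - D/2) (p + D/2) y = 1) by (unfold indI; repeat destruct Rle_dec; lra).
      rewrite Hin'. eapply Rle_trans; [apply Rabs_triang|]. rewrite Rabs_Ropp.
      assert (Rabs (D * f y * g y) <= D).
      { rewrite !Rabs_mult, (Rabs_pos_eq D) by lra. specialize (hf y). specialize (hg1 y).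
        rewrite (Rabs_pos_eq (g y)) by lra.
        assert (Rabs (f y) * g y <= 1) by (pose proof (Rabs_pos (f y)); nra).
        rewrite Rmult_assoc. rewrite <- (Rmult_1_r D) at 2. apply Rmult_le_compat_l; lra. }
      assert (0 <= indI p q y) by auto. assert (0 <= indI (q - D / 2) (q + D / 2) y) by auto.
      lra.
    + rewrite (hg2 y) by lra.
      replace (clamp p q (y - D / 2)) with p by (unfold clamp, Rmax, Rmin; repeat destruct Rle_dec; lra).
      replace (clamp p q (y + D / 2)) with p by (unfold clamp, Rmax, Rmin; repeat destruct Rle_dec; lra).
      rewrite RInt_point. unfold zero; simpl.
      replace (D * f y * 0 - 0) with 0 by ring. rewrite Rabs_R0.
      assert (0 <= indI p q y) by auto. assert (0 <= indI (p - D / 2) (p + D / 2) y) by auto.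
      assert (0 <= indI (q - D / 2) (q + D / 2) y) by auto.
      lra.
Qed.

Definition E (t al y : R) : R := exp (- (y - al) ^ 2 / (2 * t)).

Lemma exp_le1 u : u <= 0 -> exp u <= 1.
Proof.
  intros Hu. destruct (Req_dec u 0) as [->|Hne]. rewrite exp_0; lra.
  left. rewrite <- exp_0. apply exp_increasing. lra.
Qed.

Lemma exp_lip A B : 0 <= A -> 0 <= B -> Rabs (exp (- A) - exp (- B)) <= Rabs (A - B).
Proof.
  assert (K : forall A B, 0 <= A <= B -> 0 <= exp (- A) - exp (- B) <= B - A).
  { intros A0 B0 [H0 H1]. replace (exp (- B0)) with (exp (- A0) * exp (- (B0 - A0))).
    2:{ rewrite <- exp_plus. f_equal; ring. }
    pose proof (exp_ineq1_le (- (B0 - A0))). pose proof (exp_le1 (- (B0 - A0)) ltac:(lra)).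
    pose proof (exp_le1 (- A0) ltac:(lra)). pose proof (exp_pos (- A0)). nra. }
  intros HA HB. destruct (Rle_dec A B).
  - destruct (K A B ltac:(lra)). rewrite Rabs_pos_eq by lra. rewrite Rabs_minus_sym, Rabs_pos_eq; lra.
  - destruct (K B A ltac:(lra)). rewrite Rabs_minus_sym, Rabs_pos_eq by lra. rewrite Rabs_pos_eq; lra.
Qed.

Section Gauss.
Variable t : R.
Hypothesis ht : 0 < t.

Lemma E_pos al y : 0 < E t al y.
Proof. apply exp_pos. Qed.

Lemma E_le1 al y : E t al y <= 1.
Proof.
  unfold E. apply exp_le1. unfold Rdiv. pose proof (pow2_ge_0 (y - al)).
  assert (0 < / (2 * t)) by (apply Rinv_0_lt_compat; lra). nra.
Qed.

Lemma E_abs al y : Rabs (E t al y) <= 1.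
Proof. rewrite Rabs_pos_eq by (left; apply E_pos). apply E_le1. Qed.

Lemma E_cont al y : continuous (E t al) y.
Proof.
  unfold E. apply (ex_derive_continuous (K:=R_AbsRing) (V:=R_NormedModule)). auto_derive. auto.
Qed.

Lemma E_ex al a b : ex_RInt (E t al) a b.
Proof. apply (ex_RInt_continuous (V:=R_CompleteNormedModule)). intros; apply E_cont. Qed.

Lemma E_lip2 a b y z Rr : Rabs (y - a) <= Rr -> Rabs (z - b) <= Rr ->
  Rabs (E t a y - E t b z) <= Rabs ((y - a) - (z - b)) * (Rr / t).
Proof.
  intros Hy Hz. unfold E.
  replace (- (y - a) ^ 2 / (2 * t)) with (- ((y - a) ^ 2 / (2 * t))) by (field; lra).
  replace (- (z - b) ^ 2 / (2 * t)) with (- ((z - b) ^ 2 / (2 * t))) by (field; lra).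
  eapply Rle_trans; [apply exp_lip|].
  - apply Rdiv_le_0_compat; [apply pow2_ge_0|lra].
  - apply Rdiv_le_0_compat; [apply pow2_ge_0|lra].
  - replace ((y - a) ^ 2 / (2 * t) - (z - b) ^ 2 / (2 * t)) with
      (((y - a) - (z - b)) * (((y - a) + (z - b)) / (2 * t))) by (field; lra).
    rewrite Rabs_mult. apply Rmult_le_compat_l; [apply Rabs_pos|].
    unfold Rdiv. rewrite Rabs_mult, (Rabs_pos_eq (/ (2 * t))).
    2:{ left; apply Rinv_0_lt_compat; lra. }
    assert (Rabs (y - a + (z - b)) <= 2 * Rr) by (eapply Rle_trans; [apply Rabs_triang|lra]).
    apply Rle_trans with (2 * Rr * / (2 * t)).
    + apply Rmult_le_compat_r; [left; apply Rinv_0_lt_compat; lra| auto].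
    + right. field. lra.
Qed.

Lemma E_tail al Q B : al < Q -> Q <= B -> RInt (E t al) Q B <= t / (Q - al).
Proof.
  intros HQ HB.
  set (F := fun y => - t * E t al y).
  assert (Hd : Coquelicot.RInt.is_RInt (fun y => (y - al) * E t al y) Q B (minus (F B) (F Q))).
  { apply (is_RInt_derive F).
    - intros y _. unfold F, E. auto_derive. auto.
      replace (exp (- ((y + - al) * ((y + - al) * 1)) * / (2 * t))) with (exp (- (y - al) ^ 2 / (2 * t)))
        by (f_equal; field; lra). field. lra.
    - intros y _. apply (ex_derive_continuous (K:=R_AbsRing) (V:=R_NormedModule)). unfold E. auto_derive. auto. }
  apply (is_RInt_unique (V:=R_CompleteNormedModule)) in Hd.
  assert (Hex2 : ex_RInt (fun y => (y - al) * E t al y) Q B).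
  { apply (ex_RInt_continuous (V:=R_CompleteNormedModule)). intros z _. apply (ex_derive_continuous (K:=R_AbsRing) (V:=R_NormedModule)).
    unfold E. auto_derive. auto. }
  apply Rle_trans with (RInt (fun y => / (Q - al) * ((y - al) * E t al y)) Q B).
  - apply RInt_le; auto. apply E_ex.
    + apply (ex_RInt_scal (fun y => (y - al) * E t al y) Q B (/ (Q - al))). auto.
    + intros y Hy. pose proof (E_pos al y).
      replace (E t al y) with (/ (Q - al) * ((Q - al) * E t al y)) at 1 by (field; lra).
      apply Rmult_le_compat_l. left; apply Rinv_0_lt_compat; lra. nra.
  - replace (RInt (fun y => / (Q - al) * ((y - al) * E t al y)) Q B) with
      (/ (Q - al) * (RInt (fun y => (y - al) * E t al y) Q B))
      by (symmetry; exact (RInt_scal (fun y => (y - al) * E t al y) Q B (/ (Q - al)) Hex2)).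
    rewrite Hd. unfold minus, plus, opp; simpl. unfold F.
    pose proof (E_pos al B). pose proof (E_le1 al Q).
    unfold Rdiv. rewrite Rmult_comm. apply Rmult_le_compat_r. left; apply Rinv_0_lt_compat; lra.
    nra.
Qed.

Lemma RInt_mono_up al p B1 B2 : B1 <= B2 -> RInt (E t al) p B1 <= RInt (E t al) p B2.
Proof.
  intros H. assert (0 <= RInt (E t al) B1 B2).
  { apply RInt_ge_0; auto. apply E_ex. intros; left; apply E_pos. }
  pose proof (RInt_diff (E t al) p B1 B2 (E_ex al)). lra.
Qed.

Lemma Iinf_ex al p : exists L,
  (forall eps, 0 < eps -> exists M, forall B, B >= M -> Rabs (RInt (E t al) p B - L) < eps) /\
  (forall Q, Rmax p al < Q -> 0 <= L - RInt (E t al) p Q <= t / (Q - al)).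
Proof.
  set (F := fun B => RInt (E t al) p B).
  set (Q0 := Rmax p al + 1).
  assert (HQ0 : Rmax p al < Q0) by (unfold Q0; lra).
  assert (Hub : forall Q B, Rmax p al < Q -> F B <= F Q + t / (Q - al)).
  { intros Q B HQ. assert (al < Q) by (pose proof (Rmax_r p al); lra).
    assert (0 < t / (Q - al)) by (apply Rdiv_lt_0_compat; lra).
    destruct (Rle_dec B Q).
    - pose proof (RInt_mono_up al p B Q r). unfold F. lra.
    - unfold F. pose proof (RInt_diff (E t al) p Q B (E_ex al)).
      pose proof (E_tail al Q B ltac:(lra) ltac:(lra)). lra. }
  destruct (completeness (fun v => exists B, v = F B)) as [L [HL1 HL2]].
  - exists (F Q0 + t / (Q0 - al)). intros v [B ->]. apply Hub; auto.
  - exists (F 0); exists 0; auto.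
  - exists L. split.
    + intros eps Heps.
      assert (exists B0, L - eps < F B0).
      { apply Classical_Prop.NNPP. intros Hn.
        assert (L <= L - eps).
        { apply HL2. intros v [B ->]. destruct (Rle_dec (F B) (L - eps)); auto.
          exfalso; apply Hn; exists B; lra. }
        lra. }
      destruct H as [B0 HB0]. exists B0. intros B HB.
      pose proof (RInt_mono_up al p B0 B ltac:(lra)). fold (F B0) (F B) in H.
      assert (F B <= L) by (apply HL1; exists B; auto).
      rewrite Rabs_left1 by (fold (F B); lra). fold (F B). lra.
    + intros Q HQ. split.
      * assert (F Q <= L) by (apply HL1; exists Q; auto). fold (F Q). lra.
      * assert (L <= F Q + t / (Q - al)).
        { apply HL2. intros v [B ->]. apply Hub; auto. }
        fold (F Q). lra.
Qed.

End Gauss.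

Lemma sum_bound_i y0 D n (a : nat -> R) (g : R -> R) (p q M : R) : 0 < D -> p <= q -> 0 <= M ->
  (forall y, Rabs (g y) <= 1) -> (forall y, y < p \/ q < y -> g y = 0) ->
  (forall i, (i <= n)%nat -> p <= y0 + D * INR i <= q -> Rabs (a i) <= M) ->
  Rabs (sum_f_R0 (fun i => D * a i * g (y0 + D * INR i)) n) <= M * (q - p + D).
Proof.
  intros hD hpq hM hg hg0 ha.
  eapply Rle_trans; [apply Rabs_triang_gen|].
  apply Rle_trans with (sum_f_R0 (fun i => M * (D * indI p q (y0 + D * INR i))) n).
  - apply sum_Rle; intros i Hi. set (y := y0 + D * INR i). unfold indI. destruct Rle_dec; [destruct Rle_dec|].
    + rewrite !Rabs_mult, (Rabs_pos_eq D) by lra. specialize (ha i Hi ltac:(unfold y in *; lra)). specialize (hg y).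
      assert (Rabs (a i) * Rabs (g y) <= M) by (apply Rle_trans with (M * 1); [apply Rmult_le_compat; auto; apply Rabs_pos| lra]).
      rewrite Rmult_assoc. rewrite Rmult_1_r. rewrite (Rmult_comm M D). apply Rmult_le_compat_l; lra.
    + rewrite hg0 by lra. rewrite Rmult_0_r, Rabs_R0. lra.
    + rewrite hg0 by lra. rewrite Rmult_0_r, Rabs_R0. lra.
  - replace (sum_f_R0 (fun i => M * (D * indI p q (y0 + D * INR i))) n) with
      (M * sum_f_R0 (fun i => D * indI p q (y0 + D * INR i)) n) by (rewrite scal_sum; apply sum_eq; intros; ring).
    apply Rmult_le_compat_l; auto.
    apply (count_grid p q y0 D n hD hpq).
Qed.

Lemma exp_m1 th : Rabs th <= 1 -> Rabs (exp th - 1) <= 3 * Rabs th.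
Proof.
  intros H. apply Rabs_le_inv in H. destruct (Rle_dec 0 th).
  - assert (exp th - 1 <= th * exp th).
    { pose proof (exp_ineq1_le (- th)). pose proof (exp_pos th).
      assert (exp (- th) * exp th = 1) by (rewrite <- exp_plus; replace (- th + th) with 0 by ring; apply exp_0).
      nra. }
    assert (exp th <= 3).
    { apply Rle_trans with (exp 1); [|apply exp_le_3].
      destruct (Req_dec th 1) as [->|]; [lra| left; apply exp_increasing; lra]. }
    assert (1 <= exp th) by (pose proof (exp_ineq1_le th); lra).
    rewrite !Rabs_pos_eq by lra. nra.
  - pose proof (exp_ineq1_le th). assert (exp th <= 1) by (apply exp_le1; lra).
    rewrite Rabs_left1 by lra. rewrite Rabs_left by lra. lra.
Qed.

Lemma sqrt_large C : exists N0, forall n, (N0 <= n)%nat -> C <= sqrt (INR n) /\ (1 <= n)%nat.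
Proof.
  exists (S (Z.to_nat (up (C * C)))). intros n Hn. split; [|lia].
  destruct (archimed (C * C)) as [H1 _].
  assert (IZR (up (C * C)) <= INR n).
  { destruct (Z_le_gt_dec 0 (up (C * C))).
    - rewrite <- (Z2Nat.id (up (C * C))) by auto. rewrite <- INR_IZR_INZ. apply le_INR. lia.
    - apply Rle_trans with 0. apply IZR_le; lia. apply pos_INR. }
  destruct (Rle_dec C 0). { apply Rle_trans with 0; auto. apply sqrt_pos. }
  rewrite <- (sqrt_square C) by lra. apply sqrt_le_1_alt. nra.
Qed.

Definition U (t : R) (n : nat) (al : R) (g : R -> R) : R :=
  2 * cc t n / binom n (n / 2) * T t n al g.

Lemma U_sum t n al g :
  U t n al g = sum_f_R0 (fun i => (2 * cc t n) * (binom n i / binom n (n / 2)) *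
     g ((al - cc t n * INR n) + (2 * cc t n) * INR i)) n.
Proof.
  unfold U, T, Bsum. rewrite scal_sum. apply sum_eq; intros i _.
  replace (al + cc t n * (2 * INR i - INR n)) with ((al - cc t n * INR n) + (2 * cc t n) * INR i) by ring.
  unfold Rdiv. ring.
Qed.

Lemma cc_sq t n : 0 < t -> (1 <= n)%nat -> cc t n * cc t n = t / INR n /\ cc t n * sqrt (INR n) = sqrt t
  /\ cc t n * INR n = sqrt t * sqrt (INR n).
Proof.
  intros ht hn. assert (HN : 0 < INR n) by (apply lt_0_INR; lia).
  destruct (sqrt_facts _ HN) as [H1 H2]. destruct (sqrt_facts _ ht) as [H3 H4].
  unfold cc. repeat split.
  - replace (sqrt t / sqrt (INR n) * (sqrt t / sqrt (INR n))) with ((sqrt t * sqrt t) / (sqrt (INR n) * sqrt (INR n))) by (field; lra). rewrite H1, H3. reflexivity.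
  - field. lra.
  - assert (INR n / sqrt (INR n) = sqrt (INR n)) by (rewrite <- H1 at 1; field; lra).
    replace (sqrt t / sqrt (INR n) * INR n) with (sqrt t * (INR n / sqrt (INR n))) by (field; lra).
    rewrite H. reflexivity.
Qed.

Lemma abs_in_interval p q al y : p <= y <= q -> Rabs (y - al) <= Rmax (Rabs (p - al)) (Rabs (q - al)).
Proof.
  intros H. unfold Rmax. destruct Rle_dec; unfold Rabs in *; repeat destruct Rcase_abs; lra.
Qed.

Lemma U_fin_bound t g p q al0 al n : 0 < t -> p < q -> gprop g p (Some q) -> (1 <= n)%nat ->
  let Rr := Rmax (Rabs (p - al0)) (Rabs (q - al0)) + 1 in
  let K := Rr / sqrt t in
  Rabs (al - al0) <= 1 ->
  K / sqrt (INR n) <= 1/2 -> 1 <= K * sqrt (INR n) -> eta K n <= 1 ->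
  2 * cc t n <= 1 ->
  al - cc t n * INR n - cc t n <= p -> q <= al + cc t n * INR n + cc t n ->
  Rabs (U t n al g - RInt (E t al0) p q) <=
    3 * eta K n * (q - p + 1) + Rabs (al - al0) * (Rr / t) * (q - p + 1) +
    ((Rr / t) * cc t n * (q - p + 1) + 16 * cc t n).
Proof.
  intros ht hpq hg hn Rr K hal hK1 hK2 heta hc hlo hhi.
  pose proof hg as [hg1 [hg2 hg3]].
  assert (hgabs : forall y, Rabs (g y) <= 1) by (intros y; specialize (hg1 y); rewrite Rabs_pos_eq; lra).
  assert (hg0 : forall y, y < p \/ q < y -> g y = 0).
  { intros y [Hy|Hy]; [apply hg2; auto| apply (proj2 (hg3 y ltac:(lra))); auto]. }
  destruct (cc_sq t n ht hn) as [Hc1 [Hc2 Hc3]].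
  assert (Hcp : 0 < cc t n) by (apply cc_pos; auto).
  assert (HRr : 1 <= Rr) by (unfold Rr; pose proof (Rmax_l (Rabs (p - al0)) (Rabs (q - al0))); pose proof (Rabs_pos (p - al0)); lra).
  assert (Hst : 0 < sqrt t) by (apply sqrt_lt_R0; auto).
  assert (HK : 0 < K) by (unfold K; apply Rdiv_lt_0_compat; lra).
  assert (Heta0 : 0 <= eta K n).
  { unfold eta. assert (0 < INR n) by (apply lt_0_INR; lia). assert (0 < sqrt (INR n)) by (apply sqrt_lt_R0; auto).
    assert (0 < K ^ 3) by (apply pow_lt; auto). assert (0 < K ^ 2) by (apply pow_lt; auto).
    repeat apply Rplus_le_le_0_compat; apply Rlt_le; try apply Rinv_0_lt_compat; try apply Rdiv_lt_0_compat; try nra. }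
  rewrite U_sum.
  set (D := 2 * cc t n). set (y0 := al - cc t n * INR n). set (m := (n / 2)%nat).
  assert (HD : 0 < D) by (unfold D; lra).
  assert (Hyal : forall i, y0 + D * INR i - al = cc t n * (2 * INR i - INR n)) by (intros; unfold y0, D; ring).
  assert (Hin : forall y, p <= y <= q -> Rabs (y - al) <= Rr /\ Rabs (y - al0) <= Rr).
  { intros y Hy. pose proof (abs_in_interval p q al0 y Hy).
    split; [|unfold Rr; lra].
    replace (y - al) with ((y - al0) + (al0 - al)) by ring.
    eapply Rle_trans; [apply Rabs_triang|]. rewrite Rabs_minus_sym in hal. unfold Rr; lra. }
  replace (sum_f_R0 (fun i => D * (binom n i / binom n m) * g (y0 + D * INR i)) n) with
    (sum_f_R0 (fun i => D * ((binom n i / binom n m) - E t al (y0 + D * INR i)) * g (y0 + D * INR i)) n +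
     sum_f_R0 (fun i => D * (fun j => E t al (y0 + D * INR j) - E t al0 (y0 + D * INR j)) i * g (y0 + D * INR i)) n +
     gsum y0 D n (fun y => D * E t al0 y * g y)).
  2:{ unfold gsum. rewrite <- !sum_plus. apply sum_eq; intros; ring. }
  assert (T1 : Rabs (sum_f_R0 (fun i => D * ((binom n i / binom n m) - E t al (y0 + D * INR i)) * g (y0 + D * INR i)) n)
               <= 3 * eta K n * (q - p + D)).
  { apply (sum_bound_i y0 D n (fun i => (binom n i / binom n m) - E t al (y0 + D * INR i)) g p q); auto; try lra.
    intros i Hi Hy. destruct (Hin _ Hy) as [H1 _]. rewrite Hyal in H1.
    assert (Hs : Rabs (2 * INR i - INR n) <= K * sqrt (INR n)).
    { rewrite Rabs_mult, (Rabs_pos_eq (cc t n)) in H1 by lra.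
      apply (Rmult_le_reg_l (cc t n)); auto. unfold K.
      replace (cc t n * (Rr / sqrt t * sqrt (INR n))) with (Rr * (cc t n * sqrt (INR n)) / sqrt t) by (field; lra).
      rewrite Hc2. replace (Rr * sqrt t / sqrt t) with Rr by (field; lra). auto. }
    destruct (rho_form K n i HK hn hK1 hK2 Hi Hs) as [th [Hth Hrho]].
    fold m in Hrho. rewrite Hrho.
    unfold E. rewrite Hyal.
    replace (- (cc t n * (2 * INR i - INR n)) ^ 2 / (2 * t)) with (- (2 * INR i - INR n) ^ 2 / (2 * INR n)).
    2:{ replace ((cc t n * (2 * INR i - INR n)) ^ 2) with ((cc t n * cc t n) * (2 * INR i - INR n) ^ 2) by ring.
        rewrite Hc1. assert (0 < INR n) by (apply lt_0_INR; lia). field. split; lra. }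
    set (ex := exp (- (2 * INR i - INR n) ^ 2 / (2 * INR n))).
    replace (ex * exp th - ex) with (ex * (exp th - 1)) by ring.
    rewrite Rabs_mult, Rabs_pos_eq by (left; apply exp_pos).
    assert (ex <= 1).
    { unfold ex. apply exp_le1. assert (0 < INR n) by (apply lt_0_INR; lia).
      unfold Rdiv. pose proof (pow2_ge_0 (2 * INR i - INR n)). assert (0 < / (2 * INR n)) by (apply Rinv_0_lt_compat; lra). nra. }
    pose proof (exp_m1 th ltac:(lra)). pose proof (Rabs_pos (exp th - 1)).
    assert (0 <= ex) by (left; apply exp_pos). nra. }
  assert (T2 : Rabs (sum_f_R0 (fun i => D * (fun j => E t al (y0 + D * INR j) - E t al0 (y0 + D * INR j)) i * g (y0 + D * INR i)) n)
               <= Rabs (al - al0) * (Rr / t) * (q - p + D)).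
  { apply (sum_bound_i y0 D n (fun j => E t al (y0 + D * INR j) - E t al0 (y0 + D * INR j)) g p q); auto; try lra.
    - apply Rmult_le_pos; [apply Rabs_pos| apply Rdiv_le_0_compat; lra].
    - intros i Hi Hy. destruct (Hin _ Hy) as [H1 H2].
      eapply Rle_trans; [apply E_lip2; eauto|].
      replace (y0 + D * INR i - al - (y0 + D * INR i - al0)) with (al0 - al) by ring.
      rewrite Rabs_minus_sym. lra. }
  assert (T3 : Rabs (gsum y0 D n (fun y => D * E t al0 y * g y) - RInt (E t al0) p q) <=
               Rr / t * D / 2 * (q - p + D) + 8 * D).
  { apply RS; auto.
    - apply Rdiv_le_0_compat; lra.
    - intros; apply E_ex; auto.
    - intros; apply E_abs; auto.
    - intros y z Hy Hz. destruct (Hin _ Hy) as [_ H1]. destruct (Hin _ Hz) as [_ H2].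
      eapply Rle_trans; [apply E_lip2; eauto|].
      replace (z - al0 - (y - al0)) with (z - y) by ring. lra.
    - unfold y0, D. lra.
    - unfold y0, D. lra. }
  assert (HqpD : q - p + D <= q - p + 1) by (unfold D; lra).
  assert (E1 : 3 * eta K n * (q - p + D) <= 3 * eta K n * (q - p + 1)) by (apply Rmult_le_compat_l; lra).
  assert (E2 : Rabs (al - al0) * (Rr / t) * (q - p + D) <= Rabs (al - al0) * (Rr / t) * (q - p + 1)).
  { apply Rmult_le_compat_l; auto. apply Rmult_le_pos; [apply Rabs_pos| apply Rdiv_le_0_compat; lra]. }
  assert (E3 : Rr / t * D / 2 * (q - p + D) + 8 * D <= Rr / t * cc t n * (q - p + 1) + 16 * cc t n).
  { unfold D. replace (Rr / t * (2 * cc t n) / 2) with (Rr / t * cc t n) by (field; lra).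
    assert (0 <= Rr / t * cc t n) by (apply Rmult_le_pos; [apply Rdiv_le_0_compat|]; lra).
    assert (Rr / t * cc t n * (q - p + 2 * cc t n) <= Rr / t * cc t n * (q - p + 1)) by (apply Rmult_le_compat_l; lra).
    lra. }
  match goal with |- Rabs (?A + ?B + ?C - ?I) <= _ =>
    replace (A + B + C - I) with (A + B + (C - I)) by ring end.
  eapply Rle_trans; [apply Rabs_triang|]. eapply Rle_trans; [apply Rplus_le_compat_r; apply Rabs_triang|].
  lra.
Qed.

Lemma eta_le K n : 0 < K -> (1 <= n)%nat -> 1 <= sqrt (INR n) ->
  eta K n <= (4 * K ^ 3 + 4 * K ^ 2 + 1) / sqrt (INR n).
Proof.
  intros HK hn Hs. assert (HN : 0 < INR n) by (apply lt_0_INR; lia).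
  destruct (sqrt_facts _ HN) as [H1 H2]. set (s := sqrt (INR n)) in *.
  unfold eta. fold s. rewrite <- H1.
  assert (0 < K ^ 2) by (apply pow_lt; auto).
  assert (4 * K ^ 2 / (s * s) <= 4 * K ^ 2 / s).
  { unfold Rdiv. apply Rmult_le_compat_l; [lra|]. apply Rinv_le_contravar; nra. }
  assert (/ (2 * (s * s)) <= 1 / s).
  { unfold Rdiv. rewrite Rmult_1_l. apply Rinv_le_contravar; nra. }
  assert (E : (4 * K ^ 3 + 4 * K ^ 2 + 1) / s = 4 * K ^ 3 / s + 4 * K ^ 2 / s + 1 / s) by (field; lra).
  lra.
Qed.

Lemma GLfin t g p q al0 (al : nat -> R) : 0 < t -> p < q -> gprop g p (Some q) -> Un_cv al al0 ->
  Un_cv (fun n => U t n (al n) g) (RInt (E t al0) p q).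
Proof.
  intros ht hpq hg Hal eps Heps.
  set (Rr := Rmax (Rabs (p - al0)) (Rabs (q - al0)) + 1).
  set (K := Rr / sqrt t).
  set (W := q - p + 1).
  assert (HRr : 1 <= Rr) by (unfold Rr; pose proof (Rmax_l (Rabs (p - al0)) (Rabs (q - al0))); pose proof (Rabs_pos (p - al0)); lra).
  assert (Hst : 0 < sqrt t) by (apply sqrt_lt_R0; auto).
  assert (HK : 0 < K) by (unfold K; apply Rdiv_lt_0_compat; lra).
  assert (HW : 0 < W) by (unfold W; lra).
  assert (HRt : 0 < Rr / t) by (apply Rdiv_lt_0_compat; lra).
  set (dl := Rmin 1 (eps / (3 * (Rr / t) * W))).
  assert (Hdl : 0 < dl).
  { unfold dl. apply Rmin_pos; [lra|]. apply Rdiv_lt_0_compat; auto. apply Rmult_lt_0_compat; [|auto]. lra. }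
  destruct (Hal dl Hdl) as [N1 HN1].
  set (A := 4 * K ^ 3 + 4 * K ^ 2 + 1).
  assert (HA : 0 < A) by (unfold A; assert (0 < K ^ 3) by (apply pow_lt; auto); assert (0 < K ^ 2) by (apply pow_lt; auto); lra).
  set (C := Rmax (Rmax (Rmax (2 * K) (1 / K)) (Rmax (A * (1 + 9 * W / eps) + 1) (2 * sqrt t)))
                 (Rmax (3 * sqrt t * (Rr / t * W + 16) / eps + 1) ((Rabs al0 + 1 + Rabs p + Rabs q) / sqrt t + 1))).
  destruct (sqrt_large (Rmax C 1)) as [N2 HN2].
  exists (Nat.max N1 N2). intros n Hn.
  destruct (HN2 n ltac:(lia)) as [Hs hn]. specialize (HN1 n ltac:(lia)). unfold R_dist in *.
  set (s := sqrt (INR n)) in *.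
  assert (Hs1 : 1 <= s) by (pose proof (Rmax_r C 1); lra).
  assert (HsC : C <= s) by (pose proof (Rmax_l C 1); lra).
  assert (Hsp : 0 < s) by lra.
  unfold C in HsC.
  repeat match type of HsC with Rmax ?a ?b <= ?c =>
    let h := fresh "HC" in pose proof (Rle_trans _ _ _ (Rmax_l a b) HsC) as h;
    pose proof (Rle_trans _ _ _ (Rmax_r a b) HsC); clear HsC end.
  repeat match goal with H : Rmax ?a ?b <= ?c |- _ =>
    pose proof (Rle_trans _ _ _ (Rmax_l a b) H); pose proof (Rle_trans _ _ _ (Rmax_r a b) H); clear H end.
  destruct (cc_sq t n ht hn) as [Hc1 [Hc2 Hc3]]. fold s in Hc2, Hc3.
  assert (Hcc : cc t n = sqrt t / s) by (unfold cc; fold s; auto).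
  assert (hal : Rabs (al n - al0) <= 1) by (pose proof (Rmin_l 1 (eps / (3 * (Rr / t) * W))) as Hm; fold dl in Hm; lra).
  assert (hK1 : K / s <= 1/2).
  { apply (Rmult_le_reg_r s); auto. replace (K / s * s) with K by (field; lra). lra. }
  assert (hK2 : 1 <= K * s).
  { assert (Hk : 1 / K * K <= s * K) by (apply Rmult_le_compat_r; lra).
    replace (1 / K * K) with 1 in Hk by (field; lra). lra. }
  assert (heta : eta K n <= A / s) by (apply eta_le; auto).
  assert (HAs : A / s <= 1 /\ 3 * (A / s) * W < eps / 3).
  { assert (A * (1 + 9 * W / eps) < s) by lra.
    assert (0 < 9 * W / eps) by (apply Rdiv_lt_0_compat; lra).
    split.
    - apply (Rmult_le_reg_r s); auto. replace (A / s * s) with A by (field; lra). nra.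
    - apply (Rmult_lt_reg_r s); auto. replace (3 * (A / s) * W * s) with (3 * A * W) by (field; lra).
      assert (A * (9 * W / eps) < s) by nra.
      assert (A * (9 * W / eps) * (eps / 3) = 3 * A * W) by (field; lra).
      assert (A * (9 * W / eps) * (eps / 3) < s * (eps / 3)) by (apply Rmult_lt_compat_r; lra).
      lra. }
  assert (hc : 2 * cc t n <= 1).
  { rewrite Hcc. apply (Rmult_le_reg_r s); auto. replace (2 * (sqrt t / s) * s) with (2 * sqrt t) by (field; lra). lra. }
  assert (hcN : Rabs al0 + 1 + Rabs p + Rabs q <= cc t n * INR n).
  { rewrite Hc3. assert (Hk : (Rabs al0 + 1 + Rabs p + Rabs q) / sqrt t < s) by lra.
    apply (Rmult_lt_compat_l (sqrt t)) in Hk; auto. replace (sqrt t * ((Rabs al0 + 1 + Rabs p + Rabs q) / sqrt t)) with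
      (Rabs al0 + 1 + Rabs p + Rabs q) in Hk by (field; lra). lra. }
  assert (hcp : 0 < cc t n) by (apply cc_pos; auto).
  assert (hRS : Rr / t * cc t n * W + 16 * cc t n < eps / 3).
  { rewrite Hcc. assert (3 * sqrt t * (Rr / t * W + 16) / eps < s) by lra.
    assert (0 < Rr / t * W + 16) by (assert (0 < Rr / t * W) by (apply Rmult_lt_0_compat; auto); lra).
    apply (Rmult_lt_reg_r (3 * s / eps)). apply Rdiv_lt_0_compat; lra.
    replace ((Rr / t * (sqrt t / s) * W + 16 * (sqrt t / s)) * (3 * s / eps)) with (3 * sqrt t * (Rr / t * W + 16) / eps) by (field; lra).
    replace (eps / 3 * (3 * s / eps)) with s by (field; lra). lra. }
  destruct HAs as [HAs1 HAs2].
  assert (heta1 : eta K n <= 1) by lra.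
  pose proof (U_fin_bound t g p q al0 (al n) n ht hpq hg hn hal hK1 hK2 heta1 hc) as B.
  cbv zeta in B. fold Rr K W in B.
  assert (Hal2 : Rabs (al n) <= Rabs al0 + 1).
  { replace (al n) with (al0 + (al n - al0)) by ring. eapply Rle_trans; [apply Rabs_triang|]. lra. }
  pose proof (Rabs_pos p). pose proof (Rabs_pos q). pose proof (Rabs_pos al0).
  assert (Hlo : al n - cc t n * INR n - cc t n <= p) by (pose proof (Rabs_le_inv (al n) _ (Rle_refl _)); pose proof (Rabs_le_inv p _ (Rle_refl _)); lra).
  assert (Hhi : q <= al n + cc t n * INR n + cc t n) by (pose proof (Rabs_le_inv (al n) _ (Rle_refl _)); pose proof (Rabs_le_inv q _ (Rle_refl _)); lra).
  specialize (B Hlo Hhi).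
  assert (T1 : 3 * eta K n * W <= 3 * (A / s) * W) by (apply Rmult_le_compat_r; lra).
  assert (T2 : Rabs (al n - al0) * (Rr / t) * W <= eps / 3).
  { assert (Rabs (al n - al0) <= eps / (3 * (Rr / t) * W)) by (pose proof (Rmin_r 1 (eps / (3 * (Rr / t) * W))) as Hm; fold dl in Hm; lra).
    apply Rle_trans with (eps / (3 * (Rr / t) * W) * (Rr / t) * W).
    - apply Rmult_le_compat_r; [lra|]. apply Rmult_le_compat_r; lra.
    - right. field. split; lra. }
  lra.
Qed.

Lemma sum_shift_ (a : nat -> R) n : sum_f_R0 (fun i => a (S i)) n = sum_f_R0 a (S n) - a 0%nat.
Proof. induction n; simpl; [ring|]. rewrite IHn. simpl. ring. Qed.

Lemma sum_tail n u Mb : (1 <= n)%nat -> 0 < u <= INR n -> 0 <= Mb ->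
  (forall i, (i <= n)%nat -> u - 2 < 2 * INR i - INR n <= u -> binom n (S i) / binom n (n / 2) <= Mb) ->
  sum_f_R0 (fun i => if Rlt_dec u (2 * INR i - INR n) then binom n i / binom n (n / 2) else 0) n
    <= Mb * (INR n + u) / u.
Proof.
  intros hn hu hM hb.
  set (m := (n / 2)%nat) in *.
  assert (Hbm : 0 < binom n m) by (apply binom_pos; unfold m; apply Nat.div_le_upper_bound; lia).
  set (N := INR n) in *.
  set (rho := fun i => binom n i / binom n m).
  set (a := fun i => if Rlt_dec u (2 * INR i - N) then rho i else 0).
  set (b := fun i => if Rle_dec (2 * INR i - N) u then (if Rlt_dec u (2 * INR i - N + 2) then rho (S i) else 0) else 0).
  set (q := (N - u) / (N + u)).
  assert (Hq : 0 <= q < 1) by (unfold q; split; [apply Rdiv_le_0_compat; lra| apply (Rmult_lt_reg_r (N + u)); [lra|]; field_simplify; lra]).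
  assert (Hrho0 : forall i, 0 <= rho i) by (intros; unfold rho; apply Rdiv_le_0_compat; [apply binom_nonneg|lra]).
  assert (Ha0 : forall i, 0 <= a i) by (intros; unfold a; destruct Rlt_dec; auto; lra).
  assert (Hb0 : forall i, 0 <= b i) by (intros; unfold b; repeat destruct Rle_dec; repeat destruct Rlt_dec; auto; lra).
  assert (Ean : a (S n) = 0).
  { unfold a, rho. rewrite (binom_over n (S n)) by lia. unfold Rdiv; rewrite Rmult_0_l. destruct Rlt_dec; auto. }
  assert (Hrec : forall i, (i <= n)%nat -> a (S i) <= q * a i + b i).
  { intros i Hi. destruct (Nat.eq_dec i n) as [->|Hin'].
    { rewrite Ean. pose proof (Ha0 n). pose proof (Hb0 n). nra. }
    unfold a, b. rewrite S_INR.
    destruct (Rlt_dec u (2 * (INR i + 1) - N)) as [H1|H1].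
    - destruct (Rlt_dec u (2 * INR i - N)) as [H2|H2].
      + assert (Hr : rho (S i) = (N - INR i) / (INR i + 1) * rho i).
        { unfold rho. pose proof (ratio n i) as R. rewrite S_INR in R. fold N in R. pose proof (pos_INR i).
          apply (Rmult_eq_reg_l (INR i + 1)); [|lra]. unfold Rdiv. rewrite <- Rmult_assoc, R. field. lra. }
        assert (HiN : INR i + 1 <= N) by (unfold N; rewrite <- S_INR; apply le_INR; lia).
        assert (Hf : (N - INR i) / (INR i + 1) <= q).
        { unfold q. pose proof (pos_INR i). apply (Rmult_le_reg_r ((INR i + 1) * (N + u))). nra.
          field_simplify; try lra. nra. }
        destruct Rle_dec; [lra|]. rewrite Hr. pose proof (Hrho0 i). nra.
      + destruct (Rle_dec (2 * INR i - N) u); [|lra]. destruct (Rlt_dec u (2 * INR i - N + 2)); [|lra].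
        replace (S i) with (i + 1)%nat by lia. rewrite Nat.add_1_r. lra.
    - change (0 <= q * a i + b i). pose proof (Ha0 i). pose proof (Hb0 i). nra. }
  assert (Ea0 : a 0%nat = 0).
  { unfold a. simpl INR. destruct Rlt_dec; auto. pose proof (pos_INR n). unfold N in *. lra. }
  assert (Hs : sum_f_R0 a n <= q * sum_f_R0 a n + sum_f_R0 b n).
  { replace (sum_f_R0 a n) with (sum_f_R0 (fun i => a (S i)) n) at 1.
    2:{ rewrite sum_shift_, tech5, Ean, Ea0. ring. }
    rewrite scal_sum, <- sum_plus. apply sum_Rle. intros i Hi. rewrite Rmult_comm. apply Hrec; auto. }
  assert (HB : sum_f_R0 b n <= 2 * Mb).
  { apply Rle_trans with (sum_f_R0 (fun i => Mb * indI (u - 2) u (- N + 2 * INR i)) n).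
    - apply sum_Rle. intros i Hi. unfold b, indI.
      destruct (Rle_dec (2 * INR i - N) u); [destruct (Rlt_dec u (2 * INR i - N + 2))|].
      + destruct (Rle_dec (u - 2) (- N + 2 * INR i)); [|lra]. destruct (Rle_dec (- N + 2 * INR i) u); [|lra].
        rewrite Rmult_1_r. apply hb; auto. lra.
      + repeat destruct Rle_dec; lra.
      + repeat destruct Rle_dec; lra.
    - pose proof (count_grid (u - 2) u (- N) 2 n ltac:(lra) ltac:(lra)) as C.
      unfold gsum in C.
      replace (sum_f_R0 (fun i => 2 * indI (u - 2) u (- N + 2 * INR i)) n) with
        (2 * sum_f_R0 (fun i => indI (u - 2) u (- N + 2 * INR i)) n) in C by (rewrite scal_sum; apply sum_eq; intros; ring).
      replace (sum_f_R0 (fun i => Mb * indI (u - 2) u (- N + 2 * INR i)) n) with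
        (Mb * sum_f_R0 (fun i => indI (u - 2) u (- N + 2 * INR i)) n) by (rewrite scal_sum; apply sum_eq; intros; ring).
      apply Rle_trans with (Mb * 2); [apply Rmult_le_compat_l; auto; lra| lra]. }
  fold a. 
  assert (HA : sum_f_R0 a n * (1 - q) <= 2 * Mb) by lra.
  replace (Mb * (N + u) / u) with (2 * Mb / (1 - q)).
  2:{ unfold q. field. split; lra. }
  apply (Rmult_le_reg_r (1 - q)); [lra|]. replace (2 * Mb / (1 - q) * (1 - q)) with (2 * Mb) by (field; lra).
  change (sum_f_R0 a n * (1 - q) <= 2 * Mb). lra.
Qed.

Lemma U_split t n al g1 g2 : U t n al (fun y => g1 y + g2 y) = U t n al g1 + U t n al g2.
Proof. rewrite !U_sum, <- sum_plus. apply sum_eq; intros; ring. Qed.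

Lemma U_ext t n al g1 g2 : (forall y, g1 y = g2 y) -> U t n al g1 = U t n al g2.
Proof. intros H. rewrite !U_sum. apply sum_eq; intros; rewrite H; ring. Qed.

Lemma U_tail t n al Q K g : 0 < t -> (1 <= n)%nat -> 0 < K ->
  K / sqrt (INR n) <= 1/2 -> 1 <= K * sqrt (INR n) -> eta K n <= 1 ->
  let u := (Q - al) / cc t n in
  0 < u <= INR n -> u + 2 <= K * sqrt (INR n) ->
  (forall y, 0 <= g y <= 1) ->
  0 <= U t n al (fun y => if Rle_dec y Q then 0 else g y) <= 6 * (t / (Q - al) + cc t n).
Proof.
  intros ht hn HK hK1 hK2 heta u hu hu2 hg.
  destruct (cc_sq t n ht hn) as [Hc1 [Hc2 Hc3]].
  assert (hc : 0 < cc t n) by (apply cc_pos; auto).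
  assert (HQ : 0 < Q - al) by (unfold u in hu; destruct hu as [hu _];
     apply (Rmult_lt_compat_r (cc t n)) in hu; auto; unfold Rdiv in hu; rewrite Rmult_0_l, Rmult_assoc, Rinv_l in hu; lra).
  set (m := (n / 2)%nat).
  assert (Hbm : 0 < binom n m) by (apply binom_pos; unfold m; apply Nat.div_le_upper_bound; lia).
  rewrite U_sum. fold m.
  assert (Hy : forall i, Q < al - cc t n * INR n + 2 * cc t n * INR i <-> u < 2 * INR i - INR n).
  { intros i. unfold u. split; intros H.
    - apply (Rmult_lt_reg_r (cc t n)); auto. replace ((Q - al) / cc t n * cc t n) with (Q - al) by (field; lra). lra.
    - apply (Rmult_lt_compat_r (cc t n)) in H; auto. replace ((Q - al) / cc t n * cc t n) with (Q - al) in H by (field; lra). lra. }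
  split.
  - apply cond_pos_sum. intros i. apply Rmult_le_pos.
    + apply Rmult_le_pos; [lra| apply Rdiv_le_0_compat; [apply binom_nonneg| lra]].
    + destruct Rle_dec; [lra| apply hg].
  - apply Rle_trans with (2 * cc t n * sum_f_R0 (fun i => if Rlt_dec u (2 * INR i - INR n) then binom n i / binom n m else 0) n).
    + rewrite scal_sum. apply sum_Rle. intros i _.
      assert (0 <= binom n i / binom n m) by (apply Rdiv_le_0_compat; [apply binom_nonneg| lra]).
      destruct Rle_dec as [H1|H1]; destruct Rlt_dec as [H2|H2].
      * apply Hy in H2. lra.
      * lra.
      * specialize (hg (al - cc t n * INR n + 2 * cc t n * INR i)).
        assert (0 <= 2 * cc t n * (binom n i / binom n m)) by (apply Rmult_le_pos; lra). nra.
      * exfalso. apply H2, Hy. lra.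
    + assert (Hst : sum_f_R0 (fun i => if Rlt_dec u (2 * INR i - INR n) then binom n i / binom n m else 0) n
                    <= 3 * (INR n + u) / u).
      { apply sum_tail; auto; try lra.
        intros i Hi Hs. destruct (Compare_dec.le_lt_dec (S i) n) as [Hin|Hin].
        - assert (Hs' : Rabs (2 * INR (S i) - INR n) <= K * sqrt (INR n)).
          { rewrite S_INR. apply Rabs_le. lra. }
          destruct (rho_form K n (S i) HK hn hK1 hK2 Hin Hs') as [th [Hth Hr]].
          rewrite Hr.
          assert (exp (- (2 * INR (S i) - INR n) ^ 2 / (2 * INR n)) <= 1).
          { apply exp_le1. assert (0 < INR n) by (apply lt_0_INR; lia).
            unfold Rdiv. pose proof (pow2_ge_0 (2 * INR (S i) - INR n)). assert (0 < / (2 * INR n)) by (apply Rinv_0_lt_compat; lra). nra. }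
          assert (exp th <= 3).
          { apply Rle_trans with (exp 1); [|apply exp_le_3]. apply Rabs_le_inv in Hth.
            destruct (Req_dec th 1) as [->|]; [lra| left; apply exp_increasing; lra]. }
          pose proof (exp_pos th). pose proof (exp_pos (- (2 * INR (S i) - INR n) ^ 2 / (2 * INR n))). nra.
        - rewrite binom_over by lia. unfold Rdiv; rewrite Rmult_0_l; lra. }
      apply Rle_trans with (2 * cc t n * (3 * (INR n + u) / u)).
      * apply Rmult_le_compat_l; [lra| auto].
      * right. unfold u. replace (2 * cc t n * (3 * (INR n + (Q - al) / cc t n) / ((Q - al) / cc t n)))
          with (6 * ((cc t n * cc t n) * INR n / (Q - al) + cc t n)) by (field; lra).
        rewrite Hc1. field. split; [lra|]. apply Rgt_not_eq. apply lt_0_INR; lia.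
Qed.

Ltac rmx := first [ lra | (apply Rle_trans with (2 := Rmax_l _ _); rmx) | (apply Rle_trans with (2 := Rmax_r _ _); rmx) ].

Lemma GLinf t g p al0 (al : nat -> R) L : 0 < t -> gprop g p None -> Un_cv al al0 ->
  (forall eps, 0 < eps -> exists M, forall B, B >= M -> Rabs (RInt (E t al0) p B - L) < eps) ->
  Un_cv (fun n => U t n (al n) g) L.
Proof.
  intros ht hg Hal HL eps Heps.
  destruct hg as [hg1 [hg2 hg3]].
  destruct (HL (eps / 4) ltac:(lra)) as [M HM].
  set (Q := Rmax (Rmax (p + 1) (al0 + 2)) (Rmax M (al0 + 1 + 24 * t / eps))).
  assert (HQ1 : p + 1 <= Q /\ al0 + 2 <= Q /\ M <= Q /\ al0 + 1 + 24 * t / eps <= Q).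
  { unfold Q. repeat split; rmx. }
  destruct HQ1 as [HQp [HQa [HQM HQt]]].
  set (gQ := fun y => if Rle_dec y Q then g y else 0).
  assert (hgQ : gprop gQ p (Some Q)).
  { unfold gQ. split; [|split].
    - intros y; destruct Rle_dec; [apply hg1| lra].
    - intros y Hy; destruct Rle_dec; [apply hg2; auto| lra].
    - intros y Hy. split; intros H; destruct Rle_dec; try lra. apply hg3; auto. }
  pose proof (GLfin t gQ p Q al0 al ht ltac:(lra) hgQ Hal (eps / 4) ltac:(lra)) as [N1 HN1].
  destruct (Hal 1 ltac:(lra)) as [N2 HN2].
  assert (Hst : 0 < sqrt t) by (apply sqrt_lt_R0; auto).
  set (K := (Q - al0 + 1) / sqrt t + 2).
  assert (HK : 2 <= K) by (unfold K; assert (0 <= (Q - al0 + 1) / sqrt t) by (apply Rdiv_le_0_compat; lra); lra).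
  set (A := 4 * K ^ 3 + 4 * K ^ 2 + 1).
  assert (HA : 0 < A) by (unfold A; assert (0 < K ^ 3) by (apply pow_lt; lra); assert (0 < K ^ 2) by (apply pow_lt; lra); lra).
  destruct (sqrt_large (Rmax (Rmax (2 * K) A) (Rmax ((Q - al0 + 1) / sqrt t) (Rmax (24 * sqrt t / eps) 1)))) as [N3 HN3].
  exists (Nat.max N1 (Nat.max N2 N3)). intros n Hn.
  destruct (HN3 n ltac:(lia)) as [Hs hn]. specialize (HN1 n ltac:(lia)). specialize (HN2 n ltac:(lia)).
  unfold R_dist in *. set (s := sqrt (INR n)) in *.
  assert (H1 : 2 * K <= s /\ A <= s /\ (Q - al0 + 1) / sqrt t <= s /\ 24 * sqrt t / eps <= s /\ 1 <= s).
  { repeat split; (eapply Rle_trans; [| apply Hs]); rmx. }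
  destruct H1 as [Hs1 [Hs2 [Hs3 [Hs4 Hs5]]]].
  destruct (cc_sq t n ht hn) as [Hc1 [Hc2 Hc3]]. fold s in Hc2, Hc3.
  assert (Hcc : cc t n = sqrt t / s) by (unfold cc; fold s; auto).
  assert (hcp : 0 < cc t n) by (apply cc_pos; auto).
  assert (hK1 : K / s <= 1/2).
  { apply (Rmult_le_reg_r s); [lra|]. replace (K / s * s) with K by (field; lra). lra. }
  assert (hK2 : 1 <= K * s) by nra.
  assert (heta : eta K n <= 1).
  { eapply Rle_trans; [apply eta_le; auto; try fold s; lra|]. fold A. fold s. apply (Rmult_le_reg_r s); [lra|].
    replace (A / s * s) with A by (field; lra). lra. }
  assert (Hal1 : Rabs (al n - al0) <= 1) by lra. apply Rabs_le_inv in Hal1.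
  set (u := (Q - al n) / cc t n).
  assert (Hu : u = (Q - al n) * s / sqrt t) by (unfold u; rewrite Hcc; field; split; lra).
  assert (Hu1 : 0 < u) by (rewrite Hu; apply Rdiv_lt_0_compat; [apply Rmult_lt_0_compat|]; lra).
  assert (HsN : s * s = INR n) by (unfold s; apply sqrt_sqrt; apply pos_INR).
  assert (Hkey : (Q - al n) * s / sqrt t <= (Q - al0 + 1) / sqrt t * s).
  { replace ((Q - al0 + 1) / sqrt t * s) with ((Q - al0 + 1) * s / sqrt t) by (field; lra).
    unfold Rdiv. apply Rmult_le_compat_r. left; apply Rinv_0_lt_compat; lra. apply Rmult_le_compat_r; lra. }
  assert (Hu2 : u <= INR n).
  { rewrite Hu, <- HsN. eapply Rle_trans; [apply Hkey|]. apply Rmult_le_compat_r; lra. }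
  assert (Hu3 : u + 2 <= K * s).
  { unfold K. rewrite Hu. rewrite Rmult_plus_distr_r. lra. }
  pose proof (U_tail t n (al n) Q K g ht hn ltac:(lra) hK1 hK2 heta (conj Hu1 Hu2) Hu3 hg1) as [Ht1 Ht2].
  assert (Hsplit : U t n (al n) g = U t n (al n) gQ + U t n (al n) (fun y => if Rle_dec y Q then 0 else g y)).
  { rewrite <- U_split. apply U_ext. intros y. unfold gQ. destruct Rle_dec; ring. }
  rewrite Hsplit.
  assert (Htail : 6 * (t / (Q - al n) + cc t n) <= eps / 2).
  { assert (t / (Q - al n) <= eps / 24).
    { apply (Rmult_le_reg_r (Q - al n)); [lra|]. replace (t / (Q - al n) * (Q - al n)) with t by (field; lra).
      assert (24 * t / eps <= Q - al n) by lra.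
      apply (Rmult_le_compat_r (eps / 24)) in H; [|lra]. replace (24 * t / eps * (eps / 24)) with t in H by (field; lra). lra. }
    assert (cc t n <= eps / 24).
    { rewrite Hcc. apply (Rmult_le_reg_r s); [lra|]. replace (sqrt t / s * s) with (sqrt t) by (field; lra).
      apply (Rmult_le_compat_r (eps / 24)) in Hs4; [|lra]. replace (24 * sqrt t / eps * (eps / 24)) with (sqrt t) in Hs4 by (field; lra). lra. }
    lra. }
  specialize (HM Q ltac:(lra)).
  replace (U t n (al n) gQ + U t n (al n) (fun y => if Rle_dec y Q then 0 else g y) - L) with
    ((U t n (al n) gQ - RInt (E t al0) p Q) + U t n (al n) (fun y => if Rle_dec y Q then 0 else g y) + (RInt (E t al0) p Q - L)) by ring.
  eapply Rle_lt_trans; [apply Rabs_triang|]. eapply Rle_lt_trans; [apply Rplus_le_compat_r; apply Rabs_triang|].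
  rewrite (Rabs_pos_eq (U t n (al n) _)) by lra. lra.
Qed.

Lemma cc_lim t : 0 < t -> Un_cv (fun n => cc t n) 0.
Proof.
  intros ht eps Heps. assert (Hst : 0 < sqrt t) by (apply sqrt_lt_R0; auto).
  destruct (sqrt_large (sqrt t / eps + 1)) as [N HN]. exists N. intros n Hn.
  destruct (HN n ltac:(lia)) as [Hs hn]. unfold R_dist. rewrite Rminus_0_r.
  pose proof (cc_pos t n ht hn). rewrite Rabs_pos_eq by lra. unfold cc.
  assert (0 <= sqrt t / eps) by (apply Rdiv_le_0_compat; lra).
  assert (0 < sqrt (INR n)) by lra.
  apply (Rmult_lt_reg_r (sqrt (INR n))); auto. replace (sqrt t / sqrt (INR n) * sqrt (INR n)) with (sqrt t) by (field; lra).
  assert (sqrt t / eps * eps = sqrt t) by (field; lra).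
  assert (sqrt t / eps < sqrt (INR n)) by lra. nra.
Qed.

Lemma alpha_bound x t n : 0 < x -> 0 < t -> (1 <= n)%nat ->
  Rabs (x - 2 * cc t n * INR (hh x t n) - - x) <= 2 * cc t n.
Proof.
  intros hx ht hn. pose proof (cc_pos t n ht hn) as hc. set (c := cc t n) in *.
  unfold hh. fold c. destruct (archimed (- (x / c))) as [H1 H2].
  set (u := up (- (x / c))) in *.
  assert (hxc : 0 < x / c) by (apply Rdiv_lt_0_compat; auto).
  assert (Hu : (u <= 0)%Z). { apply Z.lt_succ_r. apply lt_IZR. simpl. lra. }
  rewrite INR_IZR_INZ, Z2Nat.id by lia. rewrite minus_IZR. simpl (IZR 1).
  assert (A1 : - x < c * IZR u).
  { apply (Rmult_lt_compat_l c) in H1; auto. replace (c * - (x / c)) with (- x) in H1 by (field; lra). lra. }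
  assert (A2 : c * IZR u <= - x + c).
  { assert (IZR u <= - (x / c) + 1) by lra. apply (Rmult_le_compat_l c) in H; [|lra].
    replace (c * (- (x / c) + 1)) with (- x + c) in H by (field; lra). lra. }
  apply Rabs_le. split; nra.
Qed.

Lemma alpha_lim x t : 0 < x -> 0 < t -> Un_cv (fun n => x - 2 * cc t n * INR (hh x t n)) (- x).
Proof.
  intros hx ht eps Heps. destruct (cc_lim t ht (eps / 3) ltac:(lra)) as [N HN].
  exists (Nat.max N 1). intros n Hn. specialize (HN n ltac:(lia)). unfold R_dist in *.
  rewrite Rminus_0_r in HN. pose proof (alpha_bound x t n hx ht ltac:(lia)).
  pose proof (cc_pos t n ht ltac:(lia)). rewrite Rabs_pos_eq in HN by lra. lra.
Qed.

Lemma gprop_gP : gprop gP 0 None.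
Proof.
  unfold gP. split; [|split].
  - intros y; destruct Rlt_dec; lra.
  - intros y Hy; destruct Rlt_dec; lra.
  - intros y Hy; destruct Rlt_dec; lra.
Qed.

Lemma gprop_gI a b : 0 <= a -> ext_lt a b -> gprop (gI a b) a b.
Proof.
  intros ha hab. unfold gI, in_range, Rleb. split; [|split].
  - intros y. destruct Rlt_dec; [|lra]. destruct Rle_dec; simpl; [|lra]. destruct b; [destruct Rle_dec|]; simpl; lra.
  - intros y Hy. destruct Rlt_dec; auto. destruct Rle_dec; simpl; auto. lra.
  - intros y Hy. destruct b as [b'|].
    + split; intros H.
      * destruct Rlt_dec; [|lra]. destruct Rle_dec; [|lra]. destruct Rle_dec; [|lra]. reflexivity.
      * destruct Rlt_dec; auto. destruct Rle_dec; simpl; auto. destruct Rle_dec; [lra|]. reflexivity.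
    + destruct Rlt_dec; [|lra]. destruct Rle_dec; [|lra]. reflexivity.
Qed.

Lemma final_lim x t a b Nx Nm Dx Dm k : 0 < x -> 0 < t -> 0 < k ->
  Un_cv (fun n => U t n x (gI a b)) Nx ->
  Un_cv (fun n => U t n (x - 2 * cc t n * INR (hh x t n)) (gI a b)) Nm ->
  Un_cv (fun n => U t n x gP) Dx ->
  Un_cv (fun n => U t n (x - 2 * cc t n * INR (hh x t n)) gP) Dm ->
  0 < Dx - Dm ->
  Un_cv (fun n => Pn x t n a b) ((k * (Nx - Nm)) / (k * (Dx - Dm))).
Proof.
  intros hx ht hk H1 H2 H3 H4 HD.
  apply is_lim_seq_Reals.
  replace ((k * (Nx - Nm)) / (k * (Dx - Dm))) with ((Nx - Nm) / (Dx - Dm)) by (field; lra).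
  apply is_lim_seq_Reals in H1, H2, H3, H4.
  pose proof (is_lim_seq_minus' _ _ _ _ H1 H2) as Hn.
  pose proof (is_lim_seq_minus' _ _ _ _ H3 H4) as Hd.
  pose proof (is_lim_seq_div' _ _ _ _ Hn Hd ltac:(lra)) as Hr.
  eapply is_lim_seq_ext_loc; [|apply Hr].
  pose proof Hd as Hd'. apply is_lim_seq_Reals in Hd'.
  destruct (Hd' ((Dx - Dm) / 2) ltac:(lra)) as [N HN].
  exists (Nat.max N 1). intros n Hn'. specialize (HN n ltac:(lia)). unfold R_dist in HN.
  apply Rlt_le, Rabs_le_inv in HN.
  rewrite Pn_repr by (auto; lia). unfold U in *.
  assert (hn : (1 <= n)%nat) by lia.
  assert (hc : 0 < cc t n) by (apply cc_pos; auto).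
  assert (hb : 0 < binom n (n / 2)) by (apply binom_pos; apply Nat.div_le_upper_bound; lia).
  set (kap := 2 * cc t n / binom n (n / 2)) in *.
  assert (hkap : 0 < kap) by (unfold kap; apply Rdiv_lt_0_compat; lra).
  set (T3 := T t n x gP) in *. set (T4 := T t n (x - 2 * cc t n * INR (hh x t n)) gP) in *.
  assert (T3 - T4 <> 0).
  { intros Heq. assert (kap * T3 - kap * T4 = kap * (T3 - T4)) by ring. rewrite Heq in H. lra. }
  field. split; auto. lra.
Qed.

Lemma E_lt t x y : 0 < t -> 0 < x -> 0 < y -> E t (- x) y < E t x y.
Proof.
  intros ht hx hy. unfold E. apply exp_increasing. unfold Rdiv.
  apply Rmult_lt_compat_r. apply Rinv_0_lt_compat; lra. nra.
Qed.

Lemma H_eq t x y : H t x y = / sqrt (2 * PI * t) * (E t x y - E t (- x) y).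
Proof.
  unfold H, G, E. rewrite Rmult_minus_distr_l. f_equal. f_equal. f_equal. f_equal. f_equal. ring.
Qed.

Lemma H_ex t x a b : 0 < t -> ex_RInt (H t x) a b.
Proof.
  intros ht. apply (ex_RInt_ext (fun y => / sqrt (2 * PI * t) * (E t x y - E t (- x) y))).
  { intros; symmetry; apply H_eq. }
  apply (ex_RInt_scal (fun y => E t x y - E t (- x) y)).
  exact (ex_RInt_minus (E t x) (E t (- x)) a b (E_ex t x a b) (E_ex t (- x) a b)).
Qed.

Lemma RInt_H t x a b : 0 < t ->
  RInt (H t x) a b = / sqrt (2 * PI * t) * (RInt (E t x) a b - RInt (E t (- x)) a b).
Proof.
  intros ht. rewrite (RInt_ext (H t x) (fun y => / sqrt (2 * PI * t) * (E t x y - E t (- x) y))).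
  2:{ intros; apply H_eq. }
  rewrite <- RInt_minus' by (apply E_ex; auto).
  exact (RInt_scal (fun y => E t x y - E t (- x) y) a b (/ sqrt (2 * PI * t))
    (ex_RInt_minus (E t x) (E t (- x)) a b (E_ex t x a b) (E_ex t (- x) a b))).
Qed.

Lemma isRInt_H t x a b : 0 < t -> is_RInt (H t x) a b (RInt (H t x) a b).
Proof.
  intros ht. exists (ex_RInt_Reals_0 _ _ _ (H_ex t x a b ht)). symmetry. apply RInt_Reals.
Qed.

Lemma k_pos t : 0 < t -> 0 < / sqrt (2 * PI * t).
Proof. intros ht. apply Rinv_0_lt_compat, sqrt_lt_R0. pose proof PI_RGT_0. nra. Qed.

Lemma infty_H t x p L1 L2 : 0 < t ->
  (forall eps, 0 < eps -> exists M, forall B, B >= M -> Rabs (RInt (E t x) p B - L1) < eps) ->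
  (forall eps, 0 < eps -> exists M, forall B, B >= M -> Rabs (RInt (E t (- x)) p B - L2) < eps) ->
  is_RInt_infty (H t x) p (/ sqrt (2 * PI * t) * (L1 - L2)).
Proof.
  intros ht H1 H2 eps Heps. set (k := / sqrt (2 * PI * t)). pose proof (k_pos t ht) as hk. fold k in hk.
  destruct (H1 (eps / (2 * k))) as [M1 HM1]. { apply Rdiv_lt_0_compat; lra. }
  destruct (H2 (eps / (2 * k))) as [M2 HM2]. { apply Rdiv_lt_0_compat; lra. }
  exists (Rmax M1 M2). intros B HB. exists (RInt (H t x) p B). split; [apply isRInt_H; auto|].
  rewrite RInt_H by auto. fold k.
  specialize (HM1 B ltac:(pose proof (Rmax_l M1 M2); lra)). specialize (HM2 B ltac:(pose proof (Rmax_r M1 M2); lra)).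
  replace (k * (RInt (E t x) p B - RInt (E t (- x)) p B) - k * (L1 - L2)) with
    (k * ((RInt (E t x) p B - L1) - (RInt (E t (- x)) p B - L2))) by ring.
  rewrite Rabs_mult, Rabs_pos_eq by lra.
  apply Rle_lt_trans with (k * (Rabs (RInt (E t x) p B - L1) + Rabs (RInt (E t (- x)) p B - L2))).
  { apply Rmult_le_compat_l; [lra|]. unfold Rminus at 1. eapply Rle_trans; [apply Rabs_triang|].
    rewrite Rabs_Ropp. lra. }
  replace eps with (k * (eps / (2 * k) + eps / (2 * k))) by (field; lra).
  apply Rmult_lt_compat_l; lra.
Qed.

Lemma den_pos t x Lx Lm : 0 < t -> 0 < x ->
  (forall Q, Rmax 0 x < Q -> 0 <= Lx - RInt (E t x) 0 Q <= t / (Q - x)) ->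
  (forall Q, Rmax 0 (- x) < Q -> 0 <= Lm - RInt (E t (- x)) 0 Q <= t / (Q - - x)) ->
  0 < Lx - Lm.
Proof.
  intros ht hx Hx Hm.
  set (d0 := RInt (E t x) 0 (x + 1) - RInt (E t (- x)) 0 (x + 1)).
  assert (Hd0 : 0 < d0).
  { unfold d0. assert (RInt (E t (- x)) 0 (x + 1) < RInt (E t x) 0 (x + 1)); [|lra].
    apply RInt_lt; try lra.
    - intros; apply E_cont; auto.
    - intros; apply E_cont; auto.
    - intros y Hy. apply E_lt; lra. }
  set (Q := x + 1 + 2 * t / d0).
  assert (HQ : x + 1 <= Q) by (unfold Q; assert (0 < 2 * t / d0) by (apply Rdiv_lt_0_compat; lra); lra).
  assert (Hmax1 : Rmax 0 x < Q) by (unfold Rmax; destruct Rle_dec; lra).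
  assert (Hmax2 : Rmax 0 (- x) < Q) by (unfold Rmax; destruct Rle_dec; lra).
  destruct (Hx Q Hmax1) as [A1 _]. destruct (Hm Q Hmax2) as [_ A2].
  assert (Hmono : d0 <= RInt (E t x) 0 Q - RInt (E t (- x)) 0 Q).
  { pose proof (RInt_diff (E t x) 0 (x + 1) Q (E_ex t x)).
    pose proof (RInt_diff (E t (- x)) 0 (x + 1) Q (E_ex t (- x))).
    assert (RInt (E t (- x)) (x + 1) Q <= RInt (E t x) (x + 1) Q).
    { apply RInt_le; auto; try apply E_ex; auto. intros y Hy. left; apply E_lt; lra. }
    unfold d0. lra. }
  assert (t / (Q - - x) <= d0 / 2).
  { apply (Rmult_le_reg_r (Q + x)); [lra|]. replace (t / (Q - - x) * (Q + x)) with t by (field; lra).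
    unfold Q. replace (d0 / 2 * (x + 1 + 2 * t / d0 + x)) with (d0 / 2 * (2 * x + 1) + t) by (field; lra).
    nra. }
  lra.
Qed.

Theorem mainTheorem1 (x t : R) (hx : 0 < x) (ht : 0 < t)
  (a : R) (b : option R) (ha : 0 <= a) (hab : ext_lt a b) :
  exists num den : R,
    is_RInt_ext (H t x) a b num /\
    is_RInt_infty (H t x) 0 den /\
    Un_cv (fun n => Pn x t n a b) (num / den).
Proof.
  set (k := / sqrt (2 * PI * t)). pose proof (k_pos t ht) as hk. fold k in hk.
  destruct (Iinf_ex t ht x 0) as [Lx [HLx1 HLx2]].
  destruct (Iinf_ex t ht (- x) 0) as [Lm [HLm1 HLm2]].
  pose proof (den_pos t x Lx Lm ht hx HLx2 HLm2) as Hpos.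
  pose proof (alpha_lim x t hx ht) as Hal.
  pose proof (gprop_gI a b ha hab) as hgI.
  assert (Dx : Un_cv (fun n => U t n x gP) Lx).
  { apply (GLinf t gP 0 x (fun _ => x)); auto. apply gprop_gP. intros e He; exists 0%nat; intros; unfold R_dist; rewrite Rminus_diag, Rabs_R0; lra. }
  assert (Dm : Un_cv (fun n => U t n (x - 2 * cc t n * INR (hh x t n)) gP) Lm).
  { apply (GLinf t gP 0 (- x) (fun n => x - 2 * cc t n * INR (hh x t n))); auto. apply gprop_gP. }
  assert (Hcst : Un_cv (fun _ : nat => x) x).
  { intros e He; exists 0%nat; intros; unfold R_dist; rewrite Rminus_diag, Rabs_R0; lra. }
  destruct b as [b'|].
  - simpl in hab.
    exists (RInt (H t x) a b'), (k * (Lx - Lm)). split; [|split].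
    + simpl. apply isRInt_H; auto.
    + apply infty_H; auto.
    + rewrite RInt_H by auto. fold k.
      apply final_lim; auto; try lra.
      * apply (GLfin t (gI a (Some b')) a b' x (fun _ => x)); auto.
      * apply (GLfin t (gI a (Some b')) a b' (- x) (fun n => x - 2 * cc t n * INR (hh x t n))); auto.
  - destruct (Iinf_ex t ht x a) as [Nx [HNx1 _]].
    destruct (Iinf_ex t ht (- x) a) as [Nm [HNm1 _]].
    exists (k * (Nx - Nm)), (k * (Lx - Lm)). split; [|split].
    + simpl. apply infty_H; auto.
    + apply infty_H; auto.
    + apply final_lim; auto; try lra.
      * apply (GLinf t (gI a None) a x (fun _ => x)); auto.
      * apply (GLinf t (gI a None) a (- x) (fun n => x - 2 * cc t n * INR (hh x t n))); auto.
Qed.
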